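(* Let $N\ge3$, $\beta>-2$, $k_\infty>0$ and $p>p_S(\beta)$. There exists a unique $\bar v\in C^2(0,\infty)$ solving $$\bar v''+\frac{N-1}{r}\bar v'+k_\infty r^{\beta}\max\{\bar v,0\}^p=0\ \ (r>0),\qquad \lim_{r\to\infty}r^{N-2}\bar v(r)=1.$$ Moreover, $\bar r:=\sup\{r>0:\bar v(r)=0\}$ satisfies $0<\bar r<\infty$.
   Context: $p_S(\beta):=\frac{N+2+2\beta}{N-2}$. *)

(* Defs.v *)
From Stdlib Require Import Reals.
From Coquelicot Require Import Coquelicot.
Open Scope R_scope.

Definition pS (N : nat) (beta : R) : R := (INR N + 2 + 2 * beta) / (INR N - 2).

Definition pospow (x p : R) : R := if Rle_dec x 0 then 0 else Rpower x p.

Definition C2_pos (v : R -> R) : Prop :=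
  (forall r, 0 < r -> ex_derive v r) /\
  (forall r, 0 < r -> ex_derive (Derive v) r) /\
  (forall r, 0 < r -> continuous (Derive_n v 2) r).

Definition solves (N : nat) (beta kinf p : R) (v : R -> R) : Prop :=
  C2_pos v /\
  (forall r, 0 < r ->
     Derive_n v 2 r + (INR N - 1) / r * Derive v r
       + kinf * Rpower r beta * pospow (v r) p = 0) /\
  is_lim (fun r => r ^ (N - 2) * v r) p_infty 1.

(* Main.v *)
Require Import Defs.
From Stdlib Require Import Reals Lra Lia.
From Coquelicot Require Import Coquelicot.
Open Scope R_scope.

Lemma Rpower_pos x e : 0 < Rpower x e.
Proof. unfold Rpower; apply exp_pos. Qed.

Lemma pw_pos x e : 0 < x -> pospow x e = Rpower x e.
Proof. intros H; unfold pospow; destruct (Rle_dec x 0); [lra|auto]. Qed.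

Lemma pw_le0 x e : x <= 0 -> pospow x e = 0.
Proof. intros H; unfold pospow; destruct (Rle_dec x 0); [auto|lra]. Qed.

Lemma pw_nonneg x e : 0 <= pospow x e.
Proof. unfold pospow; destruct (Rle_dec x 0); [lra|]. left; apply Rpower_pos. Qed.

Lemma Rpower_le1 x e : 0 < x <= 1 -> 0 <= e -> Rpower x e <= 1.
Proof. intros Hx He. unfold Rpower.
  assert (ln x <= 0). { destruct (Req_dec x 1). subst; rewrite ln_1; lra.
    rewrite <- ln_1. left; apply ln_increasing; lra. }
  rewrite <- exp_0. destruct (Req_dec (e * ln x) 0). rewrite H0; lra.
  left; apply exp_increasing. nra. Qed.

Lemma pw_le1 x e : x <= 1 -> 0 <= e -> pospow x e <= 1.
Proof. intros; unfold pospow; destruct (Rle_dec x 0); [lra|].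
  apply Rpower_le1; lra. Qed.

Lemma pw_mono x y e : x <= y -> 0 <= e -> pospow x e <= pospow y e.
Proof. intros; unfold pospow; destruct (Rle_dec x 0); destruct (Rle_dec y 0).
 lra. left; apply Rpower_pos. lra. apply Rle_Rpower_l; lra. Qed.

Lemma pw_smono x y e : 0 < x < y -> 0 < e -> pospow x e < pospow y e.
Proof. intros; rewrite !pw_pos by lra. apply Rlt_Rpower_l; lra. Qed.

Lemma is_derive_Rpower x e : 0 < x -> is_derive (fun t => Rpower t e) x (e * Rpower x (e - 1)).
Proof. intros H. apply is_derive_Reals. apply derivable_pt_lim_power; auto. Qed.

Lemma is_derive_pw x e : 0 < x -> is_derive (fun t => pospow t e) x (e * Rpower x (e - 1)).
Proof. intros H. apply is_derive_ext_loc with (fun t => Rpower t e).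
  exists (mkposreal x H). intros y Hy. unfold ball in Hy; simpl in Hy; unfold AbsRing_ball, abs, minus, plus, opp in Hy; simpl in Hy.
  apply Rabs_def2 in Hy. rewrite pw_pos; auto; lra.
  apply is_derive_Rpower; auto. Qed.

Lemma Rpower_cont x e : 0 < x -> continuous (fun t => Rpower t e) x.
Proof. intros H. apply (ex_derive_continuous (fun t => Rpower t e)). eexists; apply is_derive_Rpower; auto. Qed.

Lemma pw_cont x e : 0 < e -> continuous (fun t => pospow t e) x.
Proof. intros He.
  destruct (Rlt_or_le 0 x) as [Hx|Hx].
  apply (ex_derive_continuous (fun t => pospow t e)). eexists; apply is_derive_pw; auto.
  destruct Hx as [Hx|Hx].
  - apply continuous_ext_loc with (fun _ => 0).
    exists (mkposreal (-x) ltac:(lra)). intros y Hy. unfold ball in Hy; simpl in Hy; unfold AbsRing_ball, abs, minus, plus, opp in Hy; simpl in Hy.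
    apply Rabs_def2 in Hy. rewrite pw_le0; auto; lra.
    apply continuous_const.
  - subst x. apply filterlim_locally. intros eps.
    assert (Hd : 0 < Rpower eps (/ e)) by apply Rpower_pos.
    exists (mkposreal _ Hd). intros y Hy. unfold ball in Hy |- *; simpl in Hy |- *; unfold AbsRing_ball, abs, minus, plus, opp in Hy |- *; simpl in Hy |- *.
    rewrite Ropp_0, Rplus_0_r in Hy. rewrite (pw_le0 0) by lra.
    destruct (Rle_or_lt y 0). rewrite pw_le0 by auto. rewrite Ropp_0, Rplus_0_r, Rabs_R0. apply cond_pos.
    rewrite pw_pos by auto. rewrite Ropp_0, Rplus_0_r, Rabs_pos_eq by (left; apply Rpower_pos).
    rewrite Rabs_pos_eq in Hy by lra.
    replace (pos eps) with (Rpower (Rpower eps (/ e)) e).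
    apply Rlt_Rpower_l; lra.
    rewrite Rpower_mult. replace (/ e * e) with 1 by (field; lra). apply Rpower_1, cond_pos.
Qed.

Lemma Rpower_le_self x p : 0 < x <= 1 -> 1 <= p -> Rpower x p <= x.
Proof. intros Hx Hp. replace p with (1 + (p - 1)) by ring. rewrite Rpower_plus, Rpower_1 by lra.
  assert (Rpower x (p - 1) <= 1) by (apply Rpower_le1; lra).
  assert (0 < Rpower x (p-1)) by apply Rpower_pos. nra. Qed.

Lemma pw_lip x y p : 1 <= p -> x <= 1 -> y <= 1 -> Rabs (pospow x p - pospow y p) <= p * Rabs (x - y).
Proof.
  intros Hp.
  assert (key : forall x y, y < x -> x <= 1 -> 0 <= pospow x p - pospow y p <= p * (x - y)).
  { clear x y. intros x y Hxy Hx1.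
    split. assert (pospow y p <= pospow x p) by (apply pw_mono; lra). lra.
    destruct (Rle_or_lt x 0). rewrite !pw_le0 by lra. nra.
    destruct (Rle_or_lt y 0).
    - rewrite (pw_le0 y) by lra. rewrite pw_pos by lra.
      assert (Rpower x p <= x) by (apply Rpower_le_self; lra).
      nra.
    - destruct (MVT_gen (fun t => pospow t p) y x (fun t => p * Rpower t (p - 1))) as [c [Hc Hm]].
      + intros t Ht. rewrite Rmin_left, Rmax_right in Ht by lra. apply is_derive_pw; lra.
      + intros t _. apply continuity_pt_filterlim. apply pw_cont; lra.
      + rewrite Rmin_left, Rmax_right in Hc by lra. rewrite Hm.
        assert (Rpower c (p-1) <= 1) by (apply Rpower_le1; lra). assert (p * Rpower c (p-1) <= p * 1) by (apply Rmult_le_compat_l; lra). apply Rmult_le_compat_r; lra. }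
  intros Hx Hy. destruct (Rtotal_order x y) as [H|[H|H]].
  - specialize (key y x H Hy). rewrite Rabs_minus_sym, (Rabs_minus_sym x).
    rewrite Rabs_pos_eq by lra. rewrite Rabs_pos_eq by lra. lra.
  - subst. rewrite !Rminus_diag, Rabs_R0. lra.
  - specialize (key x y H Hx). rewrite Rabs_pos_eq by lra. rewrite Rabs_pos_eq by lra. lra.
Qed.

Lemma pw_mul r x e : 0 < r -> pospow (r * x) e = Rpower r e * pospow x e.
Proof. intros Hr. destruct (Rle_or_lt x 0).
  rewrite !pw_le0 by nra. ring.
  rewrite !pw_pos by nra. rewrite Rpower_mult_distr; auto. Qed.

Lemma cont_mult (f g : R -> R) x : continuous f x -> continuous g x -> continuous (fun y => f y * g y) x.
Proof. intros; apply (continuous_mult f g); auto. Qed.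
Lemma cont_minus (f g : R -> R) x : continuous f x -> continuous g x -> continuous (fun y => f y - g y) x.
Proof. intros; apply (continuous_minus f g); auto. Qed.
Lemma cont_comp (f g : R -> R) x : continuous f x -> continuous g (f x) -> continuous (fun y => g (f y)) x.
Proof. intros; apply (continuous_comp f g); auto. Qed.
Lemma cont_const (k x : R) : continuous (fun _ : R => k) x.
Proof. apply continuous_const. Qed.
Lemma cont_id (x : R) : continuous (fun y : R => y) x.
Proof. apply continuous_id. Qed.

Lemma cont_der (f : R -> R) x : ex_derive f x -> continuous f x.
Proof. intros H; apply (ex_derive_continuous f); auto. Qed.

Lemma cont_poly K n x : continuous (fun y => K * y ^ n) x.
Proof. apply cont_der. auto_derive; auto. Qed.

Lemma RInt_correct_R (f : R -> R) a b : ex_RInt f a b -> is_RInt f a b (RInt f a b).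
Proof. apply (RInt_correct (V:=R_CompleteNormedModule)). Qed.

Lemma ex_RInt_cont (f : R -> R) a b : (forall x, continuous f x) -> ex_RInt f a b.
Proof. intros H; apply (ex_RInt_continuous (V:=R_CompleteNormedModule)); intros; apply H. Qed.

Lemma RInt_poly K n t : RInt (fun x => K * x ^ n) 0 t = K * t ^ (S n) / INR (S n).
Proof.
  apply is_RInt_unique.
  assert (HS : INR (S n) <> 0) by (apply not_0_INR; lia).
  replace (K * t ^ S n / INR (S n)) with (minus (K * t ^ S n / INR (S n)) (K * 0 ^ S n / INR (S n))).
  2:{ unfold minus, plus, opp; simpl. field; auto. }
  apply (is_RInt_derive (fun x => K * x ^ S n / INR (S n))).
  - intros x _. auto_derive; auto. simpl. field; auto.
  - intros x _. apply cont_poly.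
Qed.

Lemma ex_RInt_poly K n a b : ex_RInt (fun x => K * x ^ n) a b.
Proof. apply ex_RInt_cont. intros x. apply cont_poly. Qed.

Lemma RInt_abs_bound (f g : R -> R) a b : a <= b -> (forall x, continuous f x) -> ex_RInt g a b ->
  (forall x, a < x < b -> Rabs (f x) <= g x) -> Rabs (RInt f a b) <= RInt g a b.
Proof. intros Hab Hf Hg H.
  eapply Rle_trans. apply abs_RInt_le; auto. apply ex_RInt_cont; auto.
  apply RInt_le; auto. apply ex_RInt_cont. intros x. apply (continuous_comp f Rabs); auto. apply continuous_Rabs. Qed.

Lemma RInt_zero_neg (f : R -> R) t : t <= 0 -> (forall x, x <= 0 -> f x = 0) -> RInt f 0 t = 0.
Proof. intros Ht H. rewrite (RInt_ext f (fun _ => 0)).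
  rewrite RInt_const. unfold scal; simpl; unfold mult; simpl. ring.
  intros x Hx. rewrite Rmin_right, Rmax_left in Hx by lra. apply H; lra. Qed.

Lemma RInt_nonneg (f : R -> R) t : 0 <= t -> (forall x, continuous f x) -> (forall x, 0 <= x -> 0 <= f x) -> 0 <= RInt f 0 t.
Proof. intros. apply RInt_ge_0; auto. apply ex_RInt_cont; auto. intros; apply H1; lra. Qed.

Ltac toR := match goal with |- @eq _ ?x ?y => change (@eq R x y) end.

Section Op.
Variables a c p : R.
Hypothesis Ha : 2 < a.
Hypothesis Hc : 0 < c.
Hypothesis Hp : 1 <= p.

Definition qf (b : R -> R) (t : R) := pospow t (a - 1) * pospow (b t) p.
Definition II (b : R -> R) (t : R) := RInt (qf b) 0 t.
Definition JJ (b : R -> R) (t : R) := pospow t (1 - a) * II b t.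
Definition TT (b : R -> R) (r : R) := 1 - c * RInt (JJ b) 0 r.

Definition good (b : R -> R) := (forall x, continuous b x) /\ (forall x, b x <= 1).

Lemma qf_cont b x : (forall x, continuous b x) -> continuous (qf b) x.
Proof. intros Hb. apply cont_mult. apply pw_cont; lra.
  apply (cont_comp b (fun y => pospow y p)); auto. apply pw_cont; lra. Qed.

Lemma pw_split t s : 0 <= s <= t -> pospow s (a - 1) <= pospow t (a - 2) * s.
Proof. intros H. destruct (Rle_or_lt s 0).
  rewrite pw_le0 by auto. assert (s = 0) by lra. subst. lra.
  rewrite !pw_pos by lra. replace (a - 1) with ((a-2) + 1) by ring. rewrite Rpower_plus, Rpower_1 by lra.
  apply Rmult_le_compat_r. lra. apply Rle_Rpower_l; lra. Qed.

Lemma pw_inv_prod t : 0 < t -> pospow t (1 - a) * pospow t (a - 2) = / t.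
Proof. intros Ht. rewrite !pw_pos by auto. rewrite <- Rpower_plus.
  replace (1 - a + (a - 2)) with (- (1)) by ring. rewrite Rpower_Ropp, Rpower_1; auto. Qed.

Lemma II_deriv b t : (forall x, continuous b x) -> is_derive (II b) t (qf b t).
Proof. intros Hb. apply (is_derive_RInt (qf b) (II b) 0). apply filter_forall. intros u. apply RInt_correct_R.
  apply ex_RInt_cont. intros; apply qf_cont; auto. apply qf_cont; auto. Qed.

Lemma II_cont b t : (forall x, continuous b x) -> continuous (II b) t.
Proof. intros Hb. apply (ex_derive_continuous (II b)). eexists; apply II_deriv; auto. Qed.

Lemma II_nonneg b t : (forall x, continuous b x) -> 0 <= t -> 0 <= II b t.
Proof. intros Hb Ht. apply RInt_nonneg; auto. intros; apply qf_cont; auto.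
  intros; unfold qf. apply Rmult_le_pos; apply pw_nonneg. Qed.

Lemma II_bound b t : good b -> 0 <= t -> II b t <= pospow t (a - 2) * (t ^ 2 / 2).
Proof. intros [Hb H1] Ht. unfold II.
  replace (pospow t (a - 2) * (t ^ 2 / 2)) with (RInt (fun x => pospow t (a-2) * x ^ 1) 0 t).
  2:{ rewrite RInt_poly. simpl. field. }
  apply RInt_le; auto. apply ex_RInt_cont; intros; apply qf_cont; auto. apply ex_RInt_poly.
  intros x Hx. unfold qf. rewrite pow_1.
  assert (pospow (b x) p <= 1) by (apply pw_le1; auto; lra).
  assert (0 <= pospow (b x) p) by apply pw_nonneg.
  assert (pospow x (a-1) <= pospow t (a-2) * x) by (apply pw_split; lra).
  assert (0 <= pospow x (a-1)) by apply pw_nonneg. nra. Qed.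

Lemma JJ_bound b t : good b -> 0 <= JJ b t /\ JJ b t <= Rabs t / 2.
Proof. intros Hg. pose proof Hg as [Hb H1]. unfold JJ. destruct (Rle_or_lt t 0).
  rewrite pw_le0 by auto. rewrite Rmult_0_l. split. lra. assert (0 <= Rabs t) by apply Rabs_pos. lra.
  pose proof (II_nonneg b t Hb ltac:(lra)). pose proof (II_bound b t Hg ltac:(lra)).
  assert (0 <= pospow t (1-a)) by apply pw_nonneg. split. nra.
  rewrite Rabs_pos_eq by lra.
  apply Rle_trans with (pospow t (1 - a) * (pospow t (a - 2) * (t ^ 2 / 2))).
  apply Rmult_le_compat_l; auto.
  rewrite <- Rmult_assoc, pw_inv_prod by auto. right; field; lra. Qed.

Lemma JJ_cont b t : good b -> continuous (JJ b) t.
Proof. intros Hg. pose proof Hg as [Hb H1].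
  destruct (Rtotal_order t 0) as [Ht|[Ht|Ht]].
  - apply (continuous_ext_loc (JJ b) (fun _ => 0)).
    exists (mkposreal (-t) ltac:(lra)). intros y Hy. unfold ball in Hy; simpl in Hy; unfold AbsRing_ball, abs, minus, plus, opp in Hy; simpl in Hy.
    apply Rabs_def2 in Hy. unfold JJ. rewrite pw_le0 by lra. symmetry; apply Rmult_0_l.
    apply cont_const.
  - subst t. apply filterlim_locally. intros eps.
    exists eps. intros y Hy. unfold ball in Hy |- *; simpl in Hy |- *; unfold AbsRing_ball, abs, minus, plus, opp in Hy |- *; simpl in Hy |- *.
    unfold JJ at 2. rewrite (pw_le0 0) by lra. rewrite Rmult_0_l, Ropp_0, Rplus_0_r.
    rewrite Ropp_0, Rplus_0_r in Hy. destruct (JJ_bound b y Hg). rewrite Rabs_pos_eq by lra.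
    assert (0 <= Rabs y) by apply Rabs_pos. lra.
  - unfold JJ. apply cont_mult.
    apply continuous_ext_loc with (fun s => Rpower s (1 - a)).
    exists (mkposreal t Ht). intros y Hy. unfold ball in Hy; simpl in Hy; unfold AbsRing_ball, abs, minus, plus, opp in Hy; simpl in Hy.
    apply Rabs_def2 in Hy. rewrite pw_pos; auto; lra.
    apply Rpower_cont; auto. apply II_cont; auto. Qed.

Lemma JJ_neg b t : t <= 0 -> JJ b t = 0.
Proof. intros; unfold JJ; rewrite pw_le0 by auto; ring. Qed.

Lemma TT_deriv b r : good b -> is_derive (TT b) r (- c * JJ b r).
Proof. intros Hg. unfold TT. replace (- c * JJ b r) with (0 - c * JJ b r) by ring.
  apply (is_derive_minus (fun _ => 1) (fun r => c * RInt (JJ b) 0 r)).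
  apply (is_derive_const 1).
  apply (is_derive_scal (fun r => RInt (JJ b) 0 r)).
  apply (is_derive_RInt (JJ b) (fun r => RInt (JJ b) 0 r) 0). apply filter_forall. intros u. apply RInt_correct_R.
  apply ex_RInt_cont. intros; apply JJ_cont; auto. apply JJ_cont; auto. Qed.

Lemma TT_cont b r : good b -> continuous (TT b) r.
Proof. intros Hg. apply cont_der. eexists; apply TT_deriv; auto. Qed.

Lemma TT_neg b r : r <= 0 -> TT b r = 1.
Proof. intros H. unfold TT. rewrite RInt_zero_neg; auto. ring. intros; apply JJ_neg; auto. Qed.

Lemma RInt_JJ_nonneg b r : good b -> 0 <= r -> 0 <= RInt (JJ b) 0 r.
Proof. intros Hg Hr. apply RInt_nonneg; auto. intros; apply JJ_cont; auto. intros; apply JJ_bound; auto. Qed.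

Lemma TT_le1 b r : good b -> TT b r <= 1.
Proof. intros Hg. destruct (Rle_or_lt r 0). rewrite TT_neg; lra.
  unfold TT. pose proof (RInt_JJ_nonneg b r Hg ltac:(lra)). nra. Qed.

Lemma TT_lower b r : good b -> 0 <= r -> 1 - c * r ^ 2 / 4 <= TT b r.
Proof. intros Hg Hr. unfold TT.
  assert (RInt (JJ b) 0 r <= r ^ 2 / 4).
  { replace (r ^ 2 / 4) with (RInt (fun x => /2 * x ^ 1) 0 r) by (rewrite RInt_poly; simpl; field).
    apply RInt_le; auto. apply ex_RInt_cont; intros; apply JJ_cont; auto. apply ex_RInt_poly.
    intros x Hx. destruct (JJ_bound b x Hg). rewrite Rabs_pos_eq in H0 by lra. rewrite pow_1. lra. }
  nra. Qed.

Lemma TT_good b : good b -> good (TT b).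
Proof. intros Hg. split. intros; apply TT_cont; auto. intros; apply TT_le1; auto. Qed.

Lemma TT_lip b x y R : good b -> Rabs x <= R -> Rabs y <= R -> Rabs (TT b x - TT b y) <= c * R / 2 * Rabs (x - y).
Proof. intros Hg Hx Hy.
  destruct (MVT_gen (TT b) y x (fun t => - c * JJ b t)) as [z [Hz Hm]].
  intros; apply TT_deriv; auto. intros; apply continuity_pt_filterlim, TT_cont; auto.
  rewrite Hm. rewrite Rabs_mult. apply Rmult_le_compat_r. apply Rabs_pos.
  destruct (JJ_bound b z Hg). rewrite Rabs_mult, Rabs_Ropp, (Rabs_pos_eq c), (Rabs_pos_eq (JJ b z)) by lra.
  assert (Rabs z <= R).
  { apply Rabs_le. apply Rabs_le_between in Hx. apply Rabs_le_between in Hy.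
    revert Hz. unfold Rmin, Rmax. destruct (Rle_dec y x); lra. }
  assert (JJ b z <= R / 2) by lra. nra. Qed.

Lemma Tstep b1 b2 r K m : good b1 -> good b2 -> 0 <= r -> 0 <= K ->
  (forall t, 0 <= t <= r -> Rabs (b1 t - b2 t) <= K * t ^ (2 * m)) ->
  Rabs (TT b1 r - TT b2 r) <= c * p * K * r ^ (2 * m + 2) / (INR (2 * m + 2)) ^ 2.
Proof. intros G1 G2 Hr HK H.
  assert (Hm : 0 < INR (2 * m + 2)) by (apply lt_0_INR; lia).
  assert (HI : forall t, 0 < t <= r -> Rabs (II b1 t - II b2 t) <= pospow t (a - 2) * (p * K * t ^ (2 * m + 2) / INR (2 * m + 2))).
  { intros t Ht. unfold II.
    replace (RInt (qf b1) 0 t - RInt (qf b2) 0 t) with (RInt (fun x => qf b1 x - qf b2 x) 0 t).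
    2:{ apply (RInt_minus (V:=R_CompleteNormedModule)); apply ex_RInt_cont; intros; apply qf_cont; apply G1 || apply G2. }
    replace (pospow t (a - 2) * (p * K * t ^ (2 * m + 2) / INR (2 * m + 2))) with
      (RInt (fun x => (pospow t (a-2) * p * K) * x ^ (2 * m + 1)) 0 t).
    2:{ rewrite RInt_poly. replace (S (2 * m + 1)) with (2 * m + 2)%nat by lia. toR; field; lra. }
    apply RInt_abs_bound. lra. intros; apply cont_minus; apply qf_cont; apply G1 || apply G2.
    apply ex_RInt_poly.
    intros x Hx. unfold qf. rewrite <- Rmult_minus_distr_l, Rabs_mult.
    rewrite (Rabs_pos_eq (pospow x (a-1))) by apply pw_nonneg.
    assert (Hl : Rabs (pospow (b1 x) p - pospow (b2 x) p) <= p * (K * x ^ (2 * m))).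
    { eapply Rle_trans. apply pw_lip; auto. apply G1. apply G2. apply Rmult_le_compat_l. lra. apply H; lra. }
    assert (Hs : pospow x (a-1) <= pospow t (a-2) * x) by (apply pw_split; lra).
    assert (0 <= pospow x (a-1)) by apply pw_nonneg.
    apply Rle_trans with (pospow t (a - 2) * x * (p * (K * x ^ (2 * m)))).
    apply Rle_trans with (pospow x (a - 1) * (p * (K * x ^ (2 * m)))).
    apply Rmult_le_compat_l; auto.
    apply Rmult_le_compat_r; auto. apply Rmult_le_pos. lra. apply Rmult_le_pos; auto. apply pow_le; lra.
    right. replace (2 * m + 1)%nat with (S (2 * m)) by lia. simpl. ring. }
  assert (HJ : forall t, 0 < t < r -> Rabs (JJ b1 t - JJ b2 t) <= p * K / INR (2 * m + 2) * t ^ (2 * m + 1)).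
  { intros t Ht. unfold JJ. rewrite <- Rmult_minus_distr_l, Rabs_mult, Rabs_pos_eq by apply pw_nonneg.
    eapply Rle_trans. apply Rmult_le_compat_l. apply pw_nonneg. apply HI; lra.
    rewrite <- Rmult_assoc, pw_inv_prod by lra.
    right. replace (t ^ (2 * m + 2)) with (t ^ (2 * m + 1) * t) by (replace (2*m+2)%nat with (S (2*m+1)) by lia; simpl; ring). field; lra. }
  unfold TT. replace (1 - c * RInt (JJ b1) 0 r - (1 - c * RInt (JJ b2) 0 r)) with (c * (RInt (JJ b2) 0 r - RInt (JJ b1) 0 r)) by ring.
  rewrite Rabs_mult, Rabs_pos_eq by lra.
  replace (RInt (JJ b2) 0 r - RInt (JJ b1) 0 r) with (RInt (fun x => JJ b2 x - JJ b1 x) 0 r).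
  2:{ apply (RInt_minus (V:=R_CompleteNormedModule)); apply ex_RInt_cont; intros; apply JJ_cont; auto. }
  replace (c * p * K * r ^ (2 * m + 2) / INR (2 * m + 2) ^ 2) with
    (c * RInt (fun x => (p * K / INR (2 * m + 2)) * x ^ (2 * m + 1)) 0 r).
  2:{ rewrite RInt_poly. replace (S (2 * m + 1)) with (2 * m + 2)%nat by lia. toR; field; lra. }
  apply Rmult_le_compat_l. lra.
  apply RInt_abs_bound; auto. intros; apply cont_minus; apply JJ_cont; auto. apply ex_RInt_poly.
  intros x Hx. rewrite Rabs_minus_sym. apply HJ; lra.
Qed.
End Op.

Section Iter.
Variables a c p : R.
Hypothesis Ha : 2 < a.
Hypothesis Hc : 0 < c.
Hypothesis Hp : 1 <= p.

Fixpoint it (n : nat) : R -> R := match n with O => fun _ => 1 | S n => TT a c p (it n) end.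

Lemma it_good n : good (it n).
Proof. induction n. split. intros; apply cont_const. intros; simpl; lra.
  simpl. apply TT_good; auto. Qed.

Lemma it_neg n t : t <= 0 -> it n t = 1.
Proof. intros H; destruct n. reflexivity. simpl. apply TT_neg; auto. Qed.

Definition bnd (n : nat) (t : R) := c / 4 * (c * p) ^ n / INR (Factorial.fact n) * t ^ (2 * n + 2).

Lemma fact_pos n : 0 < INR (Factorial.fact n).
Proof. apply lt_0_INR. apply Factorial.lt_O_fact. Qed.

Lemma bnd_nonneg n t : 0 <= t -> 0 <= bnd n t.
Proof. intros Ht. unfold bnd. pose proof (fact_pos n).
  apply Rmult_le_pos. apply Rmult_le_pos. apply Rmult_le_pos. lra. apply pow_le; nra.
  left; apply Rinv_0_lt_compat; auto. apply pow_le; lra. Qed.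

Lemma bnd_mono n t R : 0 <= t <= R -> bnd n t <= bnd n R.
Proof. intros H. unfold bnd. apply Rmult_le_compat_l.
  pose proof (fact_pos n). apply Rmult_le_pos. apply Rmult_le_pos. lra. apply pow_le; nra.
  left; apply Rinv_0_lt_compat; auto. apply pow_incr; lra. Qed.

Lemma it_diff n t : 0 <= t -> Rabs (it (S n) t - it n t) <= bnd n t.
Proof. revert t. induction n; intros t Ht.
  - simpl. unfold bnd. simpl.
    pose proof (TT_le1 a c p Ha Hc Hp (fun _ => 1) t (it_good 0)).
    pose proof (TT_lower a c p Ha Hc Hp (fun _ => 1) t (it_good 0) Ht).
    rewrite Rabs_minus_sym, Rabs_pos_eq by lra. simpl in H0. lra.
  - change (Rabs (TT a c p (it (S n)) t - TT a c p (it n) t) <= bnd (S n) t).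
    assert (HK : 0 <= c / 4 * (c * p) ^ n / INR (Factorial.fact n)).
    { pose proof (fact_pos n). apply Rmult_le_pos. apply Rmult_le_pos. lra. apply pow_le; nra.
      left; apply Rinv_0_lt_compat; auto. }
    eapply Rle_trans. apply (Tstep a c p Ha Hc Hp _ _ t (c / 4 * (c * p) ^ n / INR (Factorial.fact n)) (S n)); auto.
    apply it_good. apply it_good.
    intros s Hs. replace (2 * S n)%nat with (2 * n + 2)%nat by lia. apply IHn; lra.
    unfold bnd. replace (2 * S n + 2)%nat with (2 * S n + 2)%nat by lia.
    assert (Hpow : 0 <= t ^ (2 * S n + 2)) by (apply pow_le; lra).
    pose proof (fact_pos n).
    assert (HI : 0 < INR (2 * S n + 2)) by (apply lt_0_INR; lia).
    replace (c * p * (c / 4 * (c * p) ^ n / INR (Factorial.fact n)) * t ^ (2 * S n + 2) / INR (2 * S n + 2) ^ 2)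
      with ((c / 4 * (c * p) ^ S n / INR (Factorial.fact n) * t ^ (2 * S n + 2)) * / (INR (2 * S n + 2) ^ 2))
      by (rewrite <- (tech_pow_Rmult (c * p) n); field; split; lra).
    replace (c / 4 * (c * p) ^ S n / INR (Factorial.fact (S n)) * t ^ (2 * S n + 2))
      with ((c / 4 * (c * p) ^ S n / INR (Factorial.fact n) * t ^ (2 * S n + 2)) * / INR (S n)).
    2:{ rewrite fact_simpl, mult_INR. field. split. lra. apply not_0_INR; lia. }
    apply Rmult_le_compat_l.
    apply Rmult_le_pos; auto. apply Rmult_le_pos. apply Rmult_le_pos. lra. apply pow_le; nra.
    left; apply Rinv_0_lt_compat; auto.
    apply Rinv_le_contravar. apply lt_0_INR; lia.
    rewrite <- pow_INR. apply le_INR. simpl. lia.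
Qed.

Lemma ex_series_le_R (f g : nat -> R) : (forall n, Rabs (f n) <= g n) -> ex_series g -> ex_series f.
Proof. intros H1 H2. apply (ex_series_le (K:=R_AbsRing) (V:=R_CompleteNormedModule) f g); auto. Qed.

Lemma is_series_zero : is_series (fun _ : nat => 0) 0.
Proof. apply is_series_Reals. intros e He. exists O. intros. unfold R_dist. rewrite sum_cte. rewrite Rmult_0_l, Rminus_0_r, Rabs_R0; auto. Qed.

Lemma Series_zero : Series (fun _ : nat => 0) = 0.
Proof. apply is_series_unique, is_series_zero. Qed.

Lemma lim_by_bound (x e : nat -> R) X : (forall n, Rabs (x n - X) <= e n) -> is_lim_seq e 0 -> is_lim_seq x X.
Proof. intros H He. apply (is_lim_seq_le_le (fun n => X - e n) _ (fun n => X + e n)).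
  intros n. specialize (H n). apply Rabs_le_between in H. lra.
  replace (Finite X) with (Finite (X - 0)) by (f_equal; ring). apply is_lim_seq_minus'. apply is_lim_seq_const. auto.
  replace (Finite X) with (Finite (X + 0)) by (f_equal; ring). apply is_lim_seq_plus'. apply is_lim_seq_const. auto. Qed.

Definition dd n t := it (S n) t - it n t.
Definition uu t := 1 + Series (fun n => dd n t).

Lemma ex_series_exp x : ex_series (fun n => x ^ n / INR (Factorial.fact n)).
Proof. exists (exp x). pose proof (is_exp_Reals x) as H. apply is_pseries_R in H.
  eapply is_series_ext; [|apply H]. intros n; simpl. unfold Rdiv; ring. Qed.

Lemma bnd_eq n t : bnd n t = (c / 4 * t ^ 2) * ((c * p * t ^ 2) ^ n / INR (Factorial.fact n)).
Proof. unfold bnd. rewrite pow_add, pow_mult, !Rpow_mult_distr. pose proof (fact_pos n). field. lra. Qed.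

Lemma ex_series_bnd t : ex_series (fun n => bnd n t).
Proof. eapply ex_series_ext. intros n; symmetry; apply bnd_eq.
  apply (ex_series_scal (c / 4 * t ^ 2) (fun n => (c * p * t ^ 2) ^ n / INR (Factorial.fact n))).
  apply ex_series_exp. Qed.

Lemma dd_neg n t : t <= 0 -> dd n t = 0.
Proof. intros; unfold dd; rewrite !it_neg by auto; ring. Qed.

Lemma ex_series_dd t : ex_series (fun n => dd n t).
Proof. destruct (Rle_or_lt t 0).
  - exists 0. eapply is_series_ext. intros n; symmetry; apply dd_neg; auto.
    apply is_series_zero.
  - apply (ex_series_le_R (fun n => dd n t) (fun n => bnd n t)). intros n. apply it_diff; lra. apply ex_series_bnd. Qed.

Lemma it_sum n t : it (S n) t = 1 + sum_n (fun k => dd k t) n.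
Proof. induction n. rewrite sum_O. unfold dd; simpl; ring.
  rewrite sum_Sn. change (plus ?x ?y) with (x + y). rewrite <- Rplus_assoc, <- IHn. unfold dd. ring. Qed.

Lemma it_lim t : is_lim_seq (fun n => it n t) (uu t).
Proof. apply is_lim_seq_incr_1. eapply is_lim_seq_ext. intros n; symmetry; apply it_sum.
  unfold uu. apply is_lim_seq_plus'. apply is_lim_seq_const. apply Series_correct, ex_series_dd. Qed.

Lemma uu_tail n t R : 0 <= t <= R -> Rabs (uu t - it (S n) t) <= Series (fun i => bnd (S n + i) R).
Proof. intros H. unfold uu. rewrite it_sum.
  rewrite (Series_incr_n (fun n => dd n t) (S n)) by (lia || apply ex_series_dd).
  simpl pred. rewrite sum_n_Reals. replace (1 + (sum_f_R0 (fun n => dd n t) n + Series (fun k => dd (S n + k) t)) - (1 + sum_f_R0 (fun k => dd k t) n))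
    with (Series (fun k => dd (S n + k) t)) by ring.
  assert (Hb : ex_series (fun i => bnd (S n + i) R)) by (apply (ex_series_incr_n (fun i => bnd i R)), ex_series_bnd).
  assert (Ha' : ex_series (fun k => Rabs (dd (S n + k) t))).
  { apply (ex_series_le_R _ (fun i => bnd (S n + i) R)); auto. intros k. rewrite Rabs_Rabsolu.
    eapply Rle_trans. apply it_diff; lra. apply bnd_mono; lra. }
  eapply Rle_trans. apply Series_Rabs; auto.
  apply Series_le; auto. intros k. split. apply Rabs_pos. eapply Rle_trans. apply it_diff; lra. apply bnd_mono; lra. Qed.

Lemma tail_lim R : is_lim_seq (fun n => Series (fun i => bnd (S n + i) R)) 0.
Proof.
  assert (H : forall n, Series (fun i => bnd (S n + i) R) = Series (fun i => bnd i R) - sum_n (fun i => bnd i R) n).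
  { intros n. rewrite (Series_incr_n (fun i => bnd i R) (S n)) by (lia || apply ex_series_bnd). simpl pred.
    rewrite sum_n_Reals. ring. }
  eapply is_lim_seq_ext. intros n; symmetry; apply H.
  replace (Finite 0) with (Finite (Series (fun i => bnd i R) - Series (fun i => bnd i R))) by (f_equal; ring).
  apply is_lim_seq_minus'. apply is_lim_seq_const. apply Series_correct, ex_series_bnd. Qed.

Lemma uu_le1 t : uu t <= 1.
Proof. assert (H := is_lim_seq_le (fun n => it n t) (fun _ => 1) (uu t) 1).
  simpl in H. apply H. intros n; apply it_good. apply it_lim. apply is_lim_seq_const. Qed.

Lemma uu_lip x y R : Rabs x <= R -> Rabs y <= R -> Rabs (uu x - uu y) <= c * R / 2 * Rabs (x - y).
Proof. intros Hx Hy.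
  assert (H := is_lim_seq_le (fun n => Rabs (it (S n) x - it (S n) y)) (fun _ => c * R / 2 * Rabs (x - y)) (Rabs (uu x - uu y)) (c * R / 2 * Rabs (x - y))).
  simpl in H. apply H. intros n. simpl. apply TT_lip; auto. apply it_good.
  apply (is_lim_seq_abs _ (uu x - uu y)). apply is_lim_seq_minus'. apply (is_lim_seq_incr_1 (fun n => it n x)), it_lim. apply (is_lim_seq_incr_1 (fun n => it n y)), it_lim.
  apply is_lim_seq_const. Qed.

Lemma uu_cont x : continuous uu x.
Proof. apply filterlim_locally. intros eps. set (R := Rabs x + 1).
  assert (HR : 0 < R) by (unfold R; pose proof (Rabs_pos x); lra).
  set (L := c * R / 2 + 1). assert (HL : 0 < L) by (unfold L; nra).
  assert (Hd : 0 < Rmin 1 (eps / L)). { apply Rmin_pos. lra. apply Rdiv_lt_0_compat; auto. apply cond_pos. }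
  exists (mkposreal _ Hd). intros y Hy. unfold ball in Hy |- *; simpl in Hy |- *; unfold AbsRing_ball, abs, minus, plus, opp in Hy |- *; simpl in Hy |- *.
  fold (y - x) in Hy. fold (uu y - uu x).
  assert (Hy1 : Rabs (y - x) < 1) by (eapply Rlt_le_trans; [apply Hy|apply Rmin_l]).
  assert (Hy2 : Rabs (y - x) < eps / L) by (eapply Rlt_le_trans; [apply Hy|apply Rmin_r]).
  assert (Rabs y <= R). { unfold R. replace y with (x + (y - x)) by ring. eapply Rle_trans. apply Rabs_triang. lra. }
  assert (Rabs x <= R) by (unfold R; lra).
  eapply Rle_lt_trans. apply (uu_lip y x R); auto.
  assert (Hm : c * R / 2 <= L) by (unfold L; lra).
  assert (0 <= c * R / 2) by nra.
  apply Rle_lt_trans with (L * Rabs (y - x)). apply Rmult_le_compat_r; auto. apply Rabs_pos.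
  replace (pos eps) with (L * (eps / L)) by (field; lra). apply Rmult_lt_compat_l; auto. Qed.

Lemma uu_good : good uu.
Proof. split. apply uu_cont. apply uu_le1. Qed.

Lemma uu_fix t : TT a c p uu t = uu t.
Proof. destruct (Rle_or_lt t 0) as [Ht|Ht].
  - rewrite TT_neg by auto. unfold uu. rewrite (Series_ext _ (fun _ => 0)). rewrite Series_zero. ring.
    intros n; apply dd_neg; auto.
  - assert (L1 : is_lim_seq (fun n => TT a c p (it (S n)) t) (uu t)).
    { apply (is_lim_seq_incr_1 (fun n => it (S n) t)). apply (is_lim_seq_incr_1 (fun n => it n t)). apply it_lim. }
    assert (L2 : is_lim_seq (fun n => TT a c p (it (S n)) t) (TT a c p uu t)).
    { apply (lim_by_bound _ (fun n => c * p * t ^ 2 / 4 * Series (fun i => bnd (S n + i) t))).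
      + intros n.
        assert (Hs := Tstep a c p Ha Hc Hp uu (it (S n)) t (Series (fun i => bnd (S n + i) t)) 0 uu_good (it_good (S n)) ltac:(lra)).
        assert (0 <= Series (fun i => bnd (S n + i) t)).
        { eapply Rle_trans. apply Rabs_pos. apply (uu_tail n 0 t). lra. }
        specialize (Hs H). simpl in Hs. rewrite Rabs_minus_sym.
        eapply Rle_trans. apply Hs. intros s Hs0. rewrite Rmult_1_r. apply uu_tail; lra. right. simpl. field.
      + replace (Finite 0) with (Rbar_mult (c * p * t ^ 2 / 4) 0) by (simpl; f_equal; ring).
        apply is_lim_seq_scal_l. apply tail_lim. }
    assert (E := is_lim_seq_unique _ _ L1). rewrite (is_lim_seq_unique _ _ L2) in E. injection E; auto.
Qed.
End Iter.

Section Fix.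
Variables a c p : R.
Hypothesis Ha : 2 < a.
Hypothesis Hc : 0 < c.
Hypothesis Hp : 1 <= p.
Variable u : R -> R.
Hypothesis Hg : good u.
Hypothesis Hfix : forall t, TT a c p u t = u t.

Lemma hg_cont : forall x, continuous u x.
Proof. apply Hg. Qed.
Lemma hg_le1 : forall x, u x <= 1.
Proof. apply Hg. Qed.
Local Hint Resolve hg_cont hg_le1 Hg : core.

Definition U1 t := - c * JJ a p u t.
Definition U2 t := - c * ((1 - a) * Rpower t (- a) * II a p u t + pospow (u t) p).

Lemma u_deriv t : is_derive u t (U1 t).
Proof. apply (is_derive_ext (TT a c p u)). apply Hfix. eapply TT_deriv; eauto. Qed.

Lemma u_cont t : continuous u t.
Proof. apply Hg. Qed.

Lemma U1_cont t : continuous U1 t.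
Proof. unfold U1. apply cont_mult. apply cont_const. eapply JJ_cont; eauto. Qed.

Lemma II_deriv' t : is_derive (II a p u) t (qf a p u t).
Proof. eapply II_deriv; eauto. Qed.

Lemma U1_deriv t : 0 < t -> is_derive U1 t (U2 t).
Proof. intros Ht. unfold U1, U2, JJ.
  apply (is_derive_ext_loc (fun t => - c * (Rpower t (1 - a) * II a p u t))).
  exists (mkposreal t Ht). intros y Hy. unfold ball in Hy; simpl in Hy; unfold AbsRing_ball, abs, minus, plus, opp in Hy; simpl in Hy.
  apply Rabs_def2 in Hy. rewrite pw_pos; auto; lra.
  replace ((1 - a) * Rpower t (- a) * II a p u t + pospow (u t) p) with
     ((1 - a) * Rpower t (1 - a - 1) * II a p u t + Rpower t (1 - a) * qf a p u t).
  apply (is_derive_scal (fun t => Rpower t (1 - a) * II a p u t)).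
  apply (is_derive_mult (fun t => Rpower t (1 - a)) (II a p u)).
  apply is_derive_Rpower; auto. apply II_deriv'. intros; simpl; apply Rmult_comm.
  unfold qf. rewrite pw_pos by auto. rewrite <- Rmult_assoc, <- Rpower_plus.
  replace (1 - a + (a - 1)) with 0 by ring. rewrite Rpower_O by auto.
  replace (1 - a - 1) with (- a) by ring. ring. Qed.

Lemma U2_cont t : 0 < t -> continuous U2 t.
Proof. intros Ht. unfold U2. apply cont_mult. apply cont_const.
  apply (continuous_plus (fun t => (1 - a) * Rpower t (- a) * II a p u t) (fun t => pospow (u t) p)).
  apply cont_mult. apply cont_mult. apply cont_const. apply Rpower_cont; auto.
  eapply II_cont; eauto.
  apply (cont_comp u (fun y => pospow y p)). apply Hg. apply pw_cont; lra. Qed.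

Lemma ode_u t : 0 < t -> U2 t + (a - 1) / t * U1 t + c * pospow (u t) p = 0.
Proof. intros Ht. unfold U2, U1, JJ. rewrite (pw_pos t) by auto.
  replace (Rpower t (- a)) with (Rpower t (1 - a) / t).
  field; lra.
  replace (- a) with ((1 - a) + - (1)) by ring. rewrite Rpower_plus, Rpower_Ropp, Rpower_1 by auto.
  unfold Rdiv; ring. Qed.

Lemma u_at0 : u 0 = 1.
Proof. rewrite <- Hfix. apply TT_neg; lra. Qed.

Lemma u_lower t : 0 <= t -> 1 - c * t ^ 2 / 4 <= u t.
Proof. intros Ht. rewrite <- Hfix. eapply TT_lower; eauto. Qed.

Lemma u_le1 t : u t <= 1.
Proof. apply Hg. Qed.

End Fix.

Lemma der_plus (f g : R -> R) x df dg : is_derive f x df -> is_derive g x dg -> is_derive (fun y => f y + g y) x (df + dg).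
Proof. intros; apply (is_derive_plus f g); auto. Qed.
Lemma der_minus (f g : R -> R) x df dg : is_derive f x df -> is_derive g x dg -> is_derive (fun y => f y - g y) x (df - dg).
Proof. intros; apply (is_derive_minus f g); auto. Qed.
Lemma der_mult (f g : R -> R) x df dg : is_derive f x df -> is_derive g x dg -> is_derive (fun y => f y * g y) x (df * g x + f x * dg).
Proof. intros; apply (is_derive_mult f g); auto. intros; apply Rmult_comm. Qed.
Lemma der_scal (f : R -> R) k x df : is_derive f x df -> is_derive (fun y => k * f y) x (k * df).
Proof. intros; apply (is_derive_scal f); auto. Qed.
Lemma der_comp (f g : R -> R) x df dg : is_derive f (g x) df -> is_derive g x dg -> is_derive (fun y => f (g y)) x (df * dg).
Proof. intros H1 H2. pose proof (is_derive_comp f g x df dg H1 H2) as H. simpl in H. unfold scal in H; simpl in H; unfold mult in H; simpl in H.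
  rewrite Rmult_comm. exact H. Qed.
Lemma der_ext (f g : R -> R) x l : (forall y, f y = g y) -> is_derive f x l -> is_derive g x l.
Proof. intros; eapply is_derive_ext; eauto. Qed.
Lemma der_eq (f : R -> R) (x l l' : R) : l = l' -> is_derive f x l -> is_derive f x l'.
Proof. intros; subst; auto. Qed.

Lemma locally_pos (t : R) (P : R -> Prop) : 0 < t -> (forall y, 0 < y -> P y) -> locally t P.
Proof. intros Ht H. exists (mkposreal t Ht). intros y Hy. unfold ball in Hy; simpl in Hy; unfold AbsRing_ball, abs, minus, plus, opp in Hy; simpl in Hy.
  apply Rabs_def2 in Hy. apply H; lra. Qed.

Lemma Rpower_le_neg x y e : 0 < x <= y -> e <= 0 -> Rpower y e <= Rpower x e.
Proof. intros H He. rewrite <- (Ropp_involutive e). rewrite !(Rpower_Ropp _ (- e)).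
  apply Rinv_le_contravar. apply Rpower_pos. apply Rle_Rpower_l; lra. Qed.

Lemma Rpower_lt_neg x y e : 0 < x < y -> e < 0 -> Rpower y e < Rpower x e.
Proof. intros H He. rewrite <- (Ropp_involutive e). rewrite !(Rpower_Ropp _ (- e)).
  apply Rinv_lt_contravar. apply Rmult_lt_0_compat; apply Rpower_pos. apply Rlt_Rpower_l; lra. Qed.

Lemma Rpower_1base e : Rpower 1 e = 1.
Proof. unfold Rpower. rewrite ln_1, Rmult_0_r. apply exp_0. Qed.

Section Poho.
Variables a c p : R.
Hypothesis Ha : 2 < a.
Hypothesis Hc : 0 < c.
Hypothesis Hp : 1 < p.
Hypothesis Hsub : (a - 2) * (p - 1) < 4.
Variable u : R -> R.
Hypothesis Hg : good u.
Hypothesis Hfix : forall t, TT a c p u t = u t.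
Hypothesis Hpos : forall t, 0 < t -> 0 < u t.

Let Hp1 : 1 <= p. Proof. lra. Qed.
Lemma hg_cont' : forall x, continuous u x.
Proof. apply Hg. Qed.
Lemma hg_le1' : forall x, u x <= 1.
Proof. apply Hg. Qed.
Local Hint Resolve hg_cont' hg_le1' Hg Hfix Hp1 : core.

Let I : R -> R := fun t => II a p u t.

Lemma I_der t : is_derive I t (qf a p u t).
Proof. unfold I. eapply II_deriv'; eauto. Qed.
Lemma I_cont t : continuous I t.
Proof. unfold I. eapply II_cont; eauto. Qed.
Lemma I_nonneg t : 0 <= t -> 0 <= I t.
Proof. intros; unfold I; eapply II_nonneg; eauto. Qed.
Lemma I_0 : I 0 = 0.
Proof. unfold I, II. rewrite RInt_point. reflexivity. Qed.

Lemma uder t : 0 < t -> is_derive u t (- c * Rpower t (1 - a) * I t).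
Proof. intros Ht. eapply der_eq. 2: eapply u_deriv; eauto. unfold U1, JJ. rewrite pw_pos by auto. unfold I. toR; ring. Qed.

Lemma u_nonincr x y : 0 <= x <= y -> u y <= u x.
Proof. intros H. destruct (MVT_gen u x y (U1 a c p u)) as [z [Hz Hm]].
  intros; eapply u_deriv; eauto. intros; apply continuity_pt_filterlim; apply Hg.
  assert (U1 a c p u z <= 0). { unfold U1. destruct (JJ_bound a p Ha Hp1 u z Hg). nra. }
  nra. Qed.

Lemma I_nondecr x y : 0 <= x <= y -> I x <= I y.
Proof. intros H. destruct (MVT_gen I x y (qf a p u)) as [z [Hz Hm]].
  intros; apply I_der. intros; apply continuity_pt_filterlim, I_cont.
  assert (0 <= qf a p u z) by (unfold qf; apply Rmult_le_pos; apply pw_nonneg). nra. Qed.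

Lemma I_lower r : 0 < r -> Rpower (u r) p * Rpower r a / a <= I r.
Proof. intros Hr.
  set (F := Rpower (u r) p).
  destruct (MVT_gen (fun t => I t - F * pospow t a / a) 0 r (fun t => qf a p u t - F * (a * pospow t (a - 1)) / a)) as [z [Hz Hm]].
  - intros t Ht. rewrite Rmin_left, Rmax_right in Ht by lra.
    apply der_minus. apply I_der.
    apply (der_ext (fun t => / a * (F * pospow t a))). intros; field; lra.
    apply der_eq with (/ a * (F * (a * Rpower t (a - 1)))). rewrite (pw_pos t) by lra. field; lra.
    apply der_scal, der_scal, is_derive_pw; lra.
  - intros t _. apply continuity_pt_filterlim. apply (cont_minus I (fun t => F * pospow t a / a)). apply I_cont.
    apply cont_mult. apply cont_mult. apply cont_const. apply pw_cont; lra. apply cont_const.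
  - rewrite Rmin_left, Rmax_right in Hz by lra.
    rewrite I_0, (pw_le0 0), (pw_pos r) in Hm by lra.
    assert (qf a p u z >= F * (a * pospow z (a - 1)) / a).
    { destruct (Req_dec z 0). subst z. unfold qf. rewrite !(pw_le0 0) by lra. lra.
      unfold qf. rewrite (pw_pos z) by lra. rewrite (pw_pos (u z)) by (apply Hpos; lra).
      assert (Rpower (u r) p <= Rpower (u z) p). { apply Rle_Rpower_l. lra. split. apply Hpos; lra. apply u_nonincr; lra. }
      assert (0 < Rpower z (a - 1)) by apply Rpower_pos. unfold F. apply Rle_ge.
      replace (Rpower (u r) p * (a * Rpower z (a - 1)) / a) with (Rpower z (a - 1) * Rpower (u r) p) by (field; lra).
      apply Rmult_le_compat_l; lra. }
    nra.
Qed.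

Lemma upos0 t : 0 <= t -> 0 < u t.
Proof. intros H. destruct (Req_dec t 0). subst. rewrite (u_at0 a c p); auto. lra. apply Hpos; lra. Qed.

Definition Kd := c * (p - 1) / (2 * a).

Lemma decay r : 0 <= r -> 1 + Kd * r ^ 2 <= Rpower (u r) (1 - p).
Proof. intros Hr. destruct (Req_dec r 0) as [E|E].
  subst r. rewrite (u_at0 a c p); auto. rewrite Rpower_1base. simpl. lra.
  set (V := fun t => - c * pospow t (1 - a) * I t).
  destruct (MVT_gen (fun t => Rpower (u t) (1 - p) - Kd * t ^ 2) 0 r
     (fun t => (1 - p) * Rpower (u t) (- p) * V t - 2 * Kd * t)) as [z [Hz Hm]].
  - intros t Ht. rewrite Rmin_left, Rmax_right in Ht by lra.
    apply der_minus.
    apply der_eq with ((1 - p) * Rpower (u t) (1 - p - 1) * V t).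
    replace (1 - p - 1) with (- p) by ring. reflexivity.
    apply (der_comp (fun y => Rpower y (1 - p)) u). apply is_derive_Rpower. apply Hpos; lra.
    eapply der_eq. 2: apply uder; lra. unfold V. rewrite (pw_pos t) by lra. reflexivity.
    apply der_eq with (Kd * (INR 2 * 1 * t ^ Init.Nat.pred 2)). simpl. ring.
    apply der_scal. apply (is_derive_pow (fun y => y) 2 t 1). apply (is_derive_id t).
  - intros t Ht. rewrite Rmin_left, Rmax_right in Ht by lra. apply continuity_pt_filterlim.
    apply (cont_minus (fun t => Rpower (u t) (1 - p)) (fun t => Kd * t ^ 2)).
    apply (cont_comp u (fun y => Rpower y (1 - p))). apply Hg. apply Rpower_cont, upos0; lra.
    apply cont_poly.
  - rewrite Rmin_left, Rmax_right in Hz by lra.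
    rewrite (u_at0 a c p) in Hm by auto. rewrite Rpower_1base in Hm.
    assert (Hd : 0 <= (1 - p) * Rpower (u z) (- p) * V z - 2 * Kd * z).
    { destruct (Req_dec z 0). subst z. unfold V. rewrite (pw_le0 0) by lra. lra.
      assert (Hz0 : 0 < z) by lra.
      assert (HIl := I_lower z Hz0).
      assert (Hu := Hpos z Hz0).
      assert (HV : V z <= - (c / a) * z * Rpower (u z) p).
      { unfold V. rewrite (pw_pos z) by lra.
        replace (- (c / a) * z * Rpower (u z) p) with (- c * Rpower z (1 - a) * (Rpower (u z) p * Rpower z a / a)).
        2:{ assert (Hzz : Rpower z (1 - a) * Rpower z a = z).
            { rewrite <- Rpower_plus. replace (1 - a + a) with 1 by ring. apply Rpower_1; lra. }
            set (U := Rpower (u z) p). set (A := Rpower z (1 - a)). set (B := Rpower z a). fold A B in Hzz.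
            rewrite <- Hzz. field; lra. }
        assert (0 < Rpower z (1 - a)) by apply Rpower_pos.
        assert (0 < c * Rpower z (1 - a)) by (apply Rmult_lt_0_compat; lra).
        nra. }
      assert (HN : (1 - p) * Rpower (u z) (- p) <= 0).
      { assert (0 < Rpower (u z) (- p)) by apply Rpower_pos. nra. }
      assert (HE : Rpower (u z) (- p) * Rpower (u z) p = 1).
      { rewrite <- Rpower_plus. replace (- p + p) with 0 by ring. apply Rpower_O; lra. }
      assert (H2 : (1 - p) * Rpower (u z) (- p) * V z >= (1 - p) * Rpower (u z) (- p) * (- (c / a) * z * Rpower (u z) p)) by nra.
      assert (H3 : (1 - p) * Rpower (u z) (- p) * (- (c / a) * z * Rpower (u z) p) = 2 * Kd * z).
      { replace ((1 - p) * Rpower (u z) (- p) * (- (c / a) * z * Rpower (u z) p)) with ((p - 1) * (c / a) * z * (Rpower (u z) (- p) * Rpower (u z) p)) by ring.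
        rewrite HE. unfold Kd. field; lra. }
      lra. }
    assert (0 <= Kd * r ^ 2). { unfold Kd. apply Rmult_le_pos. apply Rdiv_le_0_compat. nra. lra. nra. }
    simpl in Hm. nra.
Qed.

Lemma I_compare r : 0 < r -> c * I r * Rpower (2 * r) (1 - a) * r <= u r.
Proof. intros Hr.
  destruct (MVT_gen u r (2 * r) (U1 a c p u)) as [z [Hz Hm]].
  intros; eapply u_deriv; eauto. intros; apply continuity_pt_filterlim; apply Hg.
  rewrite Rmin_left, Rmax_right in Hz by lra.
  unfold U1, JJ in Hm. rewrite (pw_pos z) in Hm by lra.
  assert (Rpower (2 * r) (1 - a) <= Rpower z (1 - a)) by (apply Rpower_le_neg; lra).
  assert (I r <= II a p u z) by (apply (I_nondecr r z); lra).
  assert (0 <= I r) by (apply I_nonneg; lra).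
  assert (0 < u (2 * r)) by (apply Hpos; lra).
  assert (0 < Rpower (2 * r) (1 - a)) by apply Rpower_pos.
  assert (Rpower (2 * r) (1 - a) * I r <= Rpower z (1 - a) * II a p u z).
  { apply Rmult_le_compat; lra. }
  replace (c * I r * Rpower (2 * r) (1 - a) * r) with (c * r * (Rpower (2 * r) (1 - a) * I r)) by ring.
  assert (c * r * (Rpower (2 * r) (1 - a) * I r) <= c * r * (Rpower z (1 - a) * II a p u z)).
  { apply Rmult_le_compat_l; auto. nra. }
  replace (2 * r - r) with r in Hm by ring. nra. Qed.

Definition K0 := a / (p + 1) - (a - 2) / 2.
Lemma K0_pos : 0 < K0.
Proof. unfold K0. apply Rlt_Rminus. apply Rmult_lt_reg_r with (2 * (p + 1)). lra.
  field_simplify; try lra. Qed.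

Definition PP r := c ^ 2 / 2 * (Rpower r (2 - a) * (I r * I r)) - (a - 2) * c / 2 * (u r * I r)
   + c / (p + 1) * (Rpower r a * Rpower (u r) (p + 1)).

Lemma PP_deriv r : 0 < r -> is_derive PP r (c * K0 * Rpower r (a - 1) * Rpower (u r) (p + 1)).
Proof. intros Hr. assert (Hu := Hpos r Hr).
  set (X := Rpower r (1 - a)). set (Y := Rpower (u r) p).
  assert (HXp : 0 < X) by apply Rpower_pos.
  assert (HX1 : Rpower r (2 - a) = r * X).
  { unfold X. replace (2 - a) with (1 + (1 - a)) by ring. rewrite Rpower_plus, Rpower_1; auto. }
  assert (HX2 : Rpower r (2 - a - 1) = X) by (unfold X; f_equal; ring).
  assert (HX3 : Rpower r (a - 1) = / X).
  { unfold X. rewrite <- Rpower_Ropp. f_equal; ring. }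
  assert (HX4 : Rpower r a = r * / X).
  { rewrite <- HX3. replace a with (1 + (a - 1)) at 1 by ring. rewrite Rpower_plus, Rpower_1; auto. }
  assert (HY1 : Rpower (u r) (p + 1) = u r * Y).
  { unfold Y. rewrite Rpower_plus, Rpower_1; auto. ring. }
  assert (HY2 : Rpower (u r) (p + 1 - 1) = Y) by (unfold Y; f_equal; ring).
  assert (Hq : qf a p u r = / X * Y).
  { unfold qf. rewrite (pw_pos r), (pw_pos (u r)) by auto. rewrite HX3. reflexivity. }
  assert (Hd : is_derive PP r
    (c ^ 2 / 2 * ((2 - a) * Rpower r (2 - a - 1) * (I r * I r) + Rpower r (2 - a) * (qf a p u r * I r + I r * qf a p u r))
     - (a - 2) * c / 2 * ((- c * Rpower r (1 - a) * I r) * I r + u r * qf a p u r)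
     + c / (p + 1) * (a * Rpower r (a - 1) * Rpower (u r) (p + 1) + Rpower r a * ((p + 1) * Rpower (u r) (p + 1 - 1) * (- c * Rpower r (1 - a) * I r))))).
  { unfold PP. apply der_plus. apply der_minus.
    - apply der_scal. apply (der_mult (fun r => Rpower r (2 - a)) (fun r => I r * I r)).
      apply is_derive_Rpower; auto. apply der_mult; apply I_der.
    - apply der_scal. apply der_mult. apply uder; auto. apply I_der.
    - apply der_scal. apply (der_mult (fun r => Rpower r a) (fun r => Rpower (u r) (p + 1))).
      apply is_derive_Rpower; auto.
      apply der_eq with ((p + 1) * Rpower (u r) (p + 1 - 1) * (- c * Rpower r (1 - a) * I r)). ring.
      apply (der_comp (fun y => Rpower y (p + 1)) u). apply is_derive_Rpower; auto. apply uder; auto. }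
  eapply der_eq. 2: exact Hd.
  rewrite Hq, HX1, HX2, HX3, HX4, HY1, HY2. fold X. unfold K0. field. split; lra.
Qed.

Lemma PP_mono x y : 0 < x <= y -> PP x <= PP y.
Proof. intros H.
  destruct (MVT_gen PP x y (fun r => c * K0 * Rpower r (a - 1) * Rpower (u r) (p + 1))) as [z [Hz Hm]].
  intros t Ht. rewrite Rmin_left, Rmax_right in Ht by lra. apply PP_deriv; lra.
  intros t Ht. rewrite Rmin_left, Rmax_right in Ht by lra. apply continuity_pt_filterlim.
  apply (ex_derive_continuous PP). eexists. apply PP_deriv; lra.
  assert (0 < c * K0 * Rpower z (a - 1) * Rpower (u z) (p + 1)).
  { pose proof K0_pos. pose proof (Rpower_pos z (a-1)). pose proof (Rpower_pos (u z) (p+1)).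
    apply Rmult_lt_0_compat. apply Rmult_lt_0_compat. apply Rmult_lt_0_compat. all: lra. }
  nra. Qed.

Lemma PP_lower e : 0 < e <= 1 -> - ((a - 2) * c / 4) * e ^ 2 <= PP e.
Proof. intros He. unfold PP.
  assert (0 <= I e) by (apply I_nonneg; lra).
  assert (HIe : I e <= e ^ 2 / 2).
  { eapply Rle_trans. unfold I. eapply II_bound; eauto; lra.
    assert (pospow e (a - 2) <= 1) by (apply pw_le1; lra).
    assert (0 <= pospow e (a - 2)) by apply pw_nonneg.
    assert (0 <= e ^ 2 / 2) by (apply Rmult_le_pos; [apply pow_le|]; lra). nra. }
  assert (0 < u e) by (apply Hpos; lra). assert (u e <= 1) by apply Hg.
  assert (0 <= Rpower e (2 - a)) by (left; apply Rpower_pos).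
  assert (0 <= Rpower e a * Rpower (u e) (p + 1)) by (apply Rmult_le_pos; left; apply Rpower_pos).
  assert (0 <= c ^ 2 / 2 * (Rpower e (2 - a) * (I e * I e))).
  { apply Rmult_le_pos. apply Rmult_le_pos. apply pow_le; lra. lra. apply Rmult_le_pos; nra. }
  assert (0 <= c / (p + 1) * (Rpower e a * Rpower (u e) (p + 1))).
  { apply Rmult_le_pos; auto. apply Rdiv_le_0_compat; lra. }
  assert (u e * I e <= e ^ 2 / 2) by nra.
  assert (0 <= (a - 2) * c / 2) by (apply Rdiv_le_0_compat; nra).
  nra. Qed.

Lemma PP_nonneg r : 0 < r -> 0 <= PP r.
Proof. intros Hr. destruct (Rle_or_lt 0 (PP r)) as [H|H]; auto. exfalso.
  set (M := (a - 2) * c / 4). assert (HM : 0 < M) by (unfold M; apply Rdiv_lt_0_compat; nra).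
  set (e := Rmin (Rmin r 1) (- PP r / (2 * M))).
  assert (He0 : 0 < e). { unfold e. apply Rmin_pos. apply Rmin_pos; lra. apply Rdiv_lt_0_compat; lra. }
  assert (He1 : e <= r) by (unfold e; eapply Rle_trans; [apply Rmin_l|apply Rmin_l]).
  assert (He2 : e <= 1) by (unfold e; eapply Rle_trans; [apply Rmin_l|apply Rmin_r]).
  assert (He3 : e <= - PP r / (2 * M)) by (unfold e; apply Rmin_r).
  assert (H1 := PP_lower e ltac:(lra)). assert (H2 := PP_mono e r ltac:(lra)). fold M in H1.
  assert (e ^ 2 <= e) by (simpl; nra).
  assert (M * e <= - PP r / 2).
  { apply Rle_trans with (M * (- PP r / (2 * M))). apply Rmult_le_compat_l; lra. right; field; lra. }
  assert (M * e ^ 2 <= M * e) by (apply Rmult_le_compat_l; lra).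
  lra. Qed.

Lemma PP_pos r : 0 < r -> 0 < PP r.
Proof. intros Hr.
  destruct (MVT_gen PP (r / 2) r (fun r => c * K0 * Rpower r (a - 1) * Rpower (u r) (p + 1))) as [z [Hz Hm]].
  intros t Ht. rewrite Rmin_left, Rmax_right in Ht by lra. apply PP_deriv; lra.
  intros t Ht. rewrite Rmin_left, Rmax_right in Ht by lra. apply continuity_pt_filterlim.
  apply (ex_derive_continuous PP). eexists. apply PP_deriv; lra.
  rewrite Rmin_left, Rmax_right in Hz by lra.
  assert (0 < c * K0 * Rpower z (a - 1) * Rpower (u z) (p + 1)).
  { pose proof K0_pos. pose proof (Rpower_pos z (a-1)). pose proof (Rpower_pos (u z) (p+1)).
    apply Rmult_lt_0_compat. apply Rmult_lt_0_compat. apply Rmult_lt_0_compat. all: lra. }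
  assert (0 <= PP (r / 2)) by (apply PP_nonneg; lra).
  nra. Qed.

Definition Zc := Rpower 2 (1 - a).
Definition C1 := / (2 * Zc ^ 2) + c / ((p + 1) * Kd).
Definition ee := a - 2 + 4 / (1 - p).
Definition C2 := C1 * Rpower Kd (2 / (1 - p)).

Lemma Kd_pos : 0 < Kd.
Proof. unfold Kd. apply Rdiv_lt_0_compat; nra. Qed.

Lemma PP_upper r : 0 < r -> PP r <= C2 * Rpower r ee.
Proof. intros Hr.
  assert (HU := Hpos r Hr). set (U := u r) in *.
  set (X := Rpower r (1 - a)). assert (HX : 0 < X) by apply Rpower_pos.
  set (Y := Rpower U p). assert (HY : 0 < Y) by apply Rpower_pos.
  set (IR := I r). assert (HI : 0 <= IR) by (apply I_nonneg; lra).
  assert (HZ : 0 < Zc) by apply Rpower_pos.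
  assert (HKd := Kd_pos).
  assert (E1 : Rpower r (2 - a) = r * X).
  { unfold X. replace (2 - a) with (1 + (1 - a)) by ring. rewrite Rpower_plus, Rpower_1; auto. }
  assert (E2 : Rpower r a = r * / X).
  { unfold X. replace a with (1 + - (1 - a)) at 1 by ring. rewrite Rpower_plus, Rpower_1, Rpower_Ropp; auto. }
  assert (E3 : Rpower U (p + 1) = U * Y).
  { unfold Y. rewrite Rpower_plus, Rpower_1; auto. ring. }
  assert (Hcmp := I_compare r Hr). fold IR U in Hcmp.
  rewrite <- (Rpower_mult_distr 2 r) in Hcmp by lra. fold Zc X in Hcmp.
  assert (HcI : c * IR <= U / (Zc * X * r)).
  { apply Rmult_le_reg_r with (Zc * X * r). apply Rmult_lt_0_compat; [apply Rmult_lt_0_compat|]; auto.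
    replace (U / (Zc * X * r) * (Zc * X * r)) with U by (field; repeat split; lra). lra. }
  assert (HcI0 : 0 <= c * IR) by nra.
  assert (T1 : c ^ 2 / 2 * (r * X * (IR * IR)) <= U ^ 2 / (2 * Zc ^ 2 * X * r)).
  { replace (c ^ 2 / 2 * (r * X * (IR * IR))) with (r * X / 2 * ((c * IR) * (c * IR))) by field.
    replace (U ^ 2 / (2 * Zc ^ 2 * X * r)) with (r * X / 2 * ((U / (Zc * X * r)) * (U / (Zc * X * r)))) by (field; repeat split; lra).
    apply Rmult_le_compat_l. apply Rmult_le_pos; [|lra]. nra.
    apply Rmult_le_compat; lra. }
  assert (Hdec := decay r ltac:(lra)). fold U in Hdec.
  set (D := Rpower U (1 - p)) in *. assert (HD : 0 < D) by apply Rpower_pos.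
  assert (HYD : Y * D = U).
  { unfold Y, D. rewrite <- Rpower_plus. replace (p + (1 - p)) with 1 by ring. apply Rpower_1; auto. }
  assert (Hr2 : 0 < Kd * r ^ 2) by (apply Rmult_lt_0_compat; [|apply pow_lt]; lra).
  assert (HY2 : Y <= U / (Kd * r ^ 2)).
  { apply Rmult_le_reg_r with (Kd * r ^ 2); auto. replace (U / (Kd * r ^ 2) * (Kd * r ^ 2)) with U by (field; split; lra).
    rewrite <- HYD. apply Rmult_le_compat_l; lra. }
  assert (T3 : c / (p + 1) * (r * / X * (U * Y)) <= c / ((p + 1) * Kd) * (U ^ 2 / (X * r))).
  { apply Rle_trans with (c / (p + 1) * (r * / X * (U * (U / (Kd * r ^ 2))))).
    apply Rmult_le_compat_l. apply Rdiv_le_0_compat; lra.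
    apply Rmult_le_compat_l. apply Rmult_le_pos. lra. left; apply Rinv_0_lt_compat; lra.
    apply Rmult_le_compat_l; lra.
    right. field. repeat split; lra. }
  assert (T2 : 0 <= (a - 2) * c / 2 * (U * IR)).
  { apply Rmult_le_pos. apply Rdiv_le_0_compat; nra. nra. }
  assert (HPP : PP r <= C1 * (U ^ 2 / (X * r))).
  { unfold PP. fold U IR. rewrite E1, E2, E3. fold Y. unfold C1.
    assert (U ^ 2 / (2 * Zc ^ 2 * X * r) = / (2 * Zc ^ 2) * (U ^ 2 / (X * r))) by (field; repeat split; lra).
    lra. }
  assert (HUW : U <= Rpower (Kd * r ^ 2) (1 / (1 - p))).
  { replace U with (Rpower D (1 / (1 - p))).
    apply Rpower_le_neg. split; auto. lra. apply Rdiv_le_0_compat_neg || idtac.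
    unfold Rdiv. rewrite Rmult_1_l. left. apply Rinv_lt_0_compat. lra.
    unfold D. rewrite Rpower_mult. replace ((1 - p) * (1 / (1 - p))) with 1 by (field; lra). apply Rpower_1; auto. }
  assert (HU2 : U ^ 2 <= Rpower Kd (2 / (1 - p)) * Rpower r (4 / (1 - p))).
  { replace (Rpower Kd (2 / (1 - p)) * Rpower r (4 / (1 - p))) with (Rpower (Kd * r ^ 2) (1 / (1 - p)) ^ 2).
    apply pow_incr. lra.
    rewrite <- Rpower_pow by apply Rpower_pos. rewrite Rpower_mult.
    rewrite <- Rpower_mult_distr by (auto; apply pow_lt; lra).
    rewrite <- (Rpower_pow 2 r) by auto. rewrite Rpower_mult. simpl (INR 2).
    f_equal; f_equal; field; lra. }
  assert (HXr : / (X * r) = Rpower r (a - 2)).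
  { unfold X. rewrite <- (Rpower_1 r) at 2 by auto. rewrite <- Rpower_plus, <- Rpower_Ropp. f_equal. ring. }
  assert (HC1 : 0 < C1).
  { unfold C1. apply Rplus_lt_0_compat. apply Rinv_0_lt_compat. apply Rmult_lt_0_compat. lra. apply pow_lt; lra.
    apply Rdiv_lt_0_compat. lra. apply Rmult_lt_0_compat; lra. }
  eapply Rle_trans. apply HPP.
  unfold Rdiv at 1. rewrite HXr.
  apply Rle_trans with (C1 * (Rpower Kd (2 / (1 - p)) * Rpower r (4 / (1 - p)) * Rpower r (a - 2))).
  apply Rmult_le_compat_l. lra. apply Rmult_le_compat_r. left; apply Rpower_pos. auto.
  right. unfold C2, ee. rewrite Rpower_plus. ring.
Qed.

Theorem no_pos_solution : False.
Proof.
  assert (HP1 := PP_pos 1 ltac:(lra)).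
  assert (HC2 : 0 < C2).
  { unfold C2. apply Rmult_lt_0_compat. unfold C1. apply Rplus_lt_0_compat. apply Rinv_0_lt_compat.
    apply Rmult_lt_0_compat. lra. apply pow_lt; unfold Zc; apply Rpower_pos.
    apply Rdiv_lt_0_compat. lra. apply Rmult_lt_0_compat. lra. apply Kd_pos. apply Rpower_pos. }
  assert (Hee : ee < 0).
  { unfold ee. assert (4 / (1 - p) = - (4 / (p - 1))) by (field; lra). rewrite H.
    assert (a - 2 < 4 / (p - 1)). { apply Rmult_lt_reg_r with (p - 1). lra. unfold Rdiv. rewrite Rmult_assoc, Rinv_l by lra. lra. }
    lra. }
  set (B := Rpower (PP 1 / (2 * C2)) (1 / ee)).
  assert (HB : 0 < B) by apply Rpower_pos.
  set (r := 1 + B).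
  assert (H1 := PP_mono 1 r ltac:(unfold r; lra)).
  assert (H2 := PP_upper r ltac:(unfold r; lra)).
  assert (H3 : Rpower r ee < Rpower B ee) by (apply Rpower_lt_neg; unfold r; lra).
  assert (H4 : Rpower B ee = PP 1 / (2 * C2)).
  { unfold B. rewrite Rpower_mult. replace (1 / ee * ee) with 1 by (field; lra). apply Rpower_1.
    apply Rdiv_lt_0_compat; lra. }
  assert (C2 * Rpower r ee < C2 * (PP 1 / (2 * C2))) by (apply Rmult_lt_compat_l; lra).
  replace (C2 * (PP 1 / (2 * C2))) with (PP 1 / 2) in H by (field; lra).
  lra.
Qed.
End Poho.





Lemma cont_plus (f g : R -> R) x : continuous f x -> continuous g x -> continuous (fun y => f y + g y) x.
Proof. intros; apply (continuous_plus f g); auto. Qed.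

Section Tr.
Variables A B : R.
Variables u u1 u2 : R -> R.
Hypothesis H1 : forall s, 0 < s -> is_derive u s (u1 s).
Hypothesis H2 : forall s, 0 < s -> is_derive u1 s (u2 s).

Definition vt r := Rpower r A * u (Rpower r B).
Definition v1 r := A * Rpower r (A - 1) * u (Rpower r B) + Rpower r A * (u1 (Rpower r B) * (B * Rpower r (B - 1))).
Definition v2 r := A * (A - 1) * Rpower r (A - 2) * u (Rpower r B)
   + A * Rpower r (A - 1) * (u1 (Rpower r B) * (B * Rpower r (B - 1)))
   + (A * Rpower r (A - 1) * (u1 (Rpower r B) * (B * Rpower r (B - 1)))
      + Rpower r A * (u2 (Rpower r B) * (B * Rpower r (B - 1)) * (B * Rpower r (B - 1))
                      + u1 (Rpower r B) * (B * ((B - 1) * Rpower r (B - 2))))).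

Lemma vt_der r : 0 < r -> is_derive vt r (v1 r).
Proof. intros Hr. unfold vt, v1.
  apply (der_mult (fun r => Rpower r A) (fun r => u (Rpower r B))).
  apply is_derive_Rpower; auto.
  apply (der_comp u (fun r => Rpower r B)). apply H1, Rpower_pos. apply is_derive_Rpower; auto. Qed.

Lemma v1_der r : 0 < r -> is_derive v1 r (v2 r).
Proof. intros Hr. unfold v1, v2.
  apply der_plus.
  - apply der_eq with ((A * ((A - 1) * Rpower r (A - 1 - 1))) * u (Rpower r B) + A * Rpower r (A - 1) * (u1 (Rpower r B) * (B * Rpower r (B - 1)))).
    replace (A - 1 - 1) with (A - 2) by ring. ring.
    apply (der_mult (fun r => A * Rpower r (A - 1)) (fun r => u (Rpower r B))).
    apply der_scal, is_derive_Rpower; auto.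
    apply (der_comp u (fun r => Rpower r B)). apply H1, Rpower_pos. apply is_derive_Rpower; auto.
  - apply (der_mult (fun r => Rpower r A) (fun r => u1 (Rpower r B) * (B * Rpower r (B - 1)))).
    apply der_eq with (A * Rpower r (A - 1)). ring. apply is_derive_Rpower; auto.
    apply (der_mult (fun r => u1 (Rpower r B)) (fun r => B * Rpower r (B - 1))).
    apply (der_comp u1 (fun r => Rpower r B)). apply H2, Rpower_pos. apply is_derive_Rpower; auto.
    apply der_eq with (B * ((B - 1) * Rpower r (B - 1 - 1))). replace (B - 1 - 1) with (B - 2) by ring. ring.
    apply der_scal, is_derive_Rpower; auto.
Qed.

Lemma Derive_vt r : 0 < r -> Derive vt r = v1 r.
Proof. intros; apply is_derive_unique, vt_der; auto. Qed.

Lemma Derive2_vt r : 0 < r -> Derive_n vt 2 r = v2 r.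
Proof. intros Hr. simpl. apply is_derive_unique.
  apply (is_derive_ext_loc v1). apply locally_pos; auto. intros y Hy. symmetry; apply Derive_vt; auto.
  apply v1_der; auto. Qed.

Lemma v2_cont r : 0 < r -> continuous u (Rpower r B) -> continuous u1 (Rpower r B) -> continuous u2 (Rpower r B) -> continuous v2 r.
Proof. intros Hr Hu Hu1 Hu2.
  assert (HP : forall e, continuous (fun r => Rpower r e) r) by (intros; apply Rpower_cont; auto).
  assert (HC : forall (f : R -> R), continuous f (Rpower r B) -> continuous (fun r => f (Rpower r B)) r).
  { intros f Hf. apply (cont_comp (fun r => Rpower r B) f); auto. }
  unfold v2.
  repeat match goal with
   | |- continuous (fun y => @?f y + @?g y) _ => apply (cont_plus f g)
   | |- continuous (fun y => @?f y * @?g y) _ => apply (cont_mult f g)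
   | |- continuous (fun y => Rpower y _) _ => apply HP
   | |- continuous (fun _ => ?k) _ => apply cont_const
   | |- continuous (fun y => ?f (Rpower y B)) _ => apply HC; assumption
   end.
Qed.
End Tr.

Lemma Rpower_shift r e k : 0 < r -> Rpower r (e - INR k) = Rpower r e / r ^ k.
Proof. intros Hr. unfold Rminus. rewrite Rpower_plus, Rpower_Ropp, Rpower_pow by auto. reflexivity. Qed.

Lemma lap_id (n th : R) (u u1 u2 : R -> R) r : 0 < th -> 0 < r ->
  let rho := Rpower r (- th) in
  v2 (2 - n) (- th) u u1 u2 r + (n - 1) / r * v1 (2 - n) (- th) u u1 r
  = th ^ 2 * Rpower r (- n - 2 * th) * (u2 rho + (2 + (n - 2) / th - 1) / rho * u1 rho).
Proof. intros Hth Hr rho. unfold v1, v2. fold rho.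
  assert (Hrho : 0 < rho) by apply Rpower_pos.
  set (P := Rpower r (2 - n)).
  assert (E1 : Rpower r (2 - n - 1) = P / r).
  { replace (2 - n - 1) with (2 - n - INR 1) by (simpl; ring). rewrite Rpower_shift by auto. unfold P. simpl. field. lra. }
  assert (E2 : Rpower r (2 - n - 2) = P / r ^ 2).
  { replace (2 - n - 2) with (2 - n - INR 2) by (simpl; ring). rewrite Rpower_shift by auto. reflexivity. }
  assert (E3 : Rpower r (- th - 1) = rho / r).
  { replace (- th - 1) with (- th - INR 1) by (simpl; ring). rewrite Rpower_shift by auto. unfold rho. simpl. field. lra. }
  assert (E4 : Rpower r (- th - 2) = rho / r ^ 2).
  { replace (- th - 2) with (- th - INR 2) by (simpl; ring). rewrite Rpower_shift by auto. reflexivity. }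
  assert (E5 : Rpower r (- n - 2 * th) = P * rho ^ 2 / r ^ 2).
  { replace (- n - 2 * th) with ((2 - n) + (- th) + (- th) - INR 2) by (simpl; ring).
    rewrite Rpower_shift by auto. rewrite !Rpower_plus. fold P rho. simpl. field. lra. }
  rewrite E1, E2, E3, E4, E5. field. repeat split; lra.
Qed.

Section Uniq.
Variables a c p : R.
Hypothesis Ha : 2 < a.
Hypothesis Hc : 0 < c.
Hypothesis Hp : 1 <= p.

Lemma fix_unique (u1 u2 : R -> R) : good u1 -> good u2 -> (forall t, TT a c p u1 t = u1 t) -> (forall t, TT a c p u2 t = u2 t) ->
  forall t, 0 <= t -> u1 t = u2 t.
Proof. intros G1 G2 F1 F2 R HR.
  set (M := c * R ^ 2 / 4). assert (HM : 0 <= M) by (unfold M; apply Rmult_le_pos; [apply Rmult_le_pos; [lra|apply pow_le; lra]|lra]).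
  assert (Hb : forall m t, 0 <= t <= R -> Rabs (u1 t - u2 t) <= M * (c * p) ^ m / INR (Factorial.fact m) * t ^ (2 * m)).
  { induction m; intros t Ht.
    - simpl. replace (M * 1 / 1 * 1) with M by field.
      rewrite <- (F1 t), <- (F2 t).
      assert (H1 := TT_le1 a c p Ha Hc Hp u1 t G1). assert (H2 := TT_le1 a c p Ha Hc Hp u2 t G2).
      assert (H3 := TT_lower a c p Ha Hc Hp u1 t G1 ltac:(lra)). assert (H4 := TT_lower a c p Ha Hc Hp u2 t G2 ltac:(lra)).
      assert (t ^ 2 <= R ^ 2) by (apply pow_incr; lra).
      unfold M. apply Rabs_le. split; nra.
    - rewrite <- (F1 t), <- (F2 t).
      assert (HK : 0 <= M * (c * p) ^ m / INR (Factorial.fact m)).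
      { pose proof (fact_pos m). apply Rmult_le_pos. apply Rmult_le_pos. lra. apply pow_le; nra.
        left; apply Rinv_0_lt_compat; auto. }
      eapply Rle_trans. apply (Tstep a c p Ha Hc Hp u1 u2 t (M * (c * p) ^ m / INR (Factorial.fact m)) m G1 G2); auto. lra.
      intros s Hs. apply IHm; lra.
      assert (Hpow : 0 <= t ^ (2 * m + 2)) by (apply pow_le; lra).
      pose proof (fact_pos m).
      assert (HI : 0 < INR (2 * m + 2)) by (apply lt_0_INR; lia).
      replace (2 * S m)%nat with (2 * m + 2)%nat by lia.
      replace (c * p * (M * (c * p) ^ m / INR (Factorial.fact m)) * t ^ (2 * m + 2) / INR (2 * m + 2) ^ 2)
        with ((M * (c * p) ^ S m / INR (Factorial.fact m) * t ^ (2 * m + 2)) * / (INR (2 * m + 2) ^ 2))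
        by (rewrite <- (tech_pow_Rmult (c * p) m); field; split; lra).
      replace (M * (c * p) ^ S m / INR (Factorial.fact (S m)) * t ^ (2 * m + 2))
        with ((M * (c * p) ^ S m / INR (Factorial.fact m) * t ^ (2 * m + 2)) * / INR (S m)).
      2:{ rewrite fact_simpl, mult_INR. field. split. lra. apply not_0_INR; lia. }
      apply Rmult_le_compat_l.
      apply Rmult_le_pos; auto. apply Rmult_le_pos. apply Rmult_le_pos. lra. apply pow_le; nra.
      left; apply Rinv_0_lt_compat; auto.
      apply Rinv_le_contravar. apply lt_0_INR; lia.
      rewrite <- pow_INR. apply le_INR. simpl. lia. }
  set (x := c * p * R ^ 2).
  assert (Hlim : is_lim_seq (fun m => M * (x ^ m / INR (Factorial.fact m))) 0).
  { replace (Finite 0) with (Rbar_mult M 0) by (simpl; f_equal; ring).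
    apply is_lim_seq_scal_l. apply ex_series_lim_0. apply ex_series_exp. }
  assert (Hle : forall m, Rabs (u1 R - u2 R) <= M * (x ^ m / INR (Factorial.fact m))).
  { intros m. eapply Rle_trans. apply (Hb m R); lra. right. unfold x. rewrite pow_mult, !Rpow_mult_distr. field.
    pose proof (fact_pos m); lra. }
  assert (H0 := is_lim_seq_le (fun _ => Rabs (u1 R - u2 R)) _ (Rabs (u1 R - u2 R)) 0 Hle (is_lim_seq_const _) Hlim).
  simpl in H0. assert (Rabs (u1 R - u2 R) = 0) by (pose proof (Rabs_pos (u1 R - u2 R)); lra).
  apply Rabs_eq_0 in H. lra.
Qed.

Lemma cont0_small (f : R -> R) : continuous f 0 -> exists eta, 0 < eta /\ forall x, Rabs x < eta -> Rabs (f x - f 0) < 1.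
Proof. intros H. apply filterlim_locally with (eps := mkposreal 1 Rlt_0_1) in H.
  destruct H as [eta Heta]. exists eta. split. apply cond_pos. intros x Hx.
  specialize (Heta x). unfold ball in Heta; simpl in Heta; unfold AbsRing_ball, abs, minus, plus, opp in Heta; simpl in Heta.
  apply Heta. rewrite Ropp_0, Rplus_0_r. auto. Qed.

Lemma blowup (f df : R -> R) m d : 0 < m -> 0 < d -> continuous f 0 ->
  (forall r, 0 < r <= d -> is_derive f r (df r)) -> (forall r, 0 < r <= d -> m * Rpower r (1 - a) <= df r) -> False.
Proof. intros Hm Hd Hc0 Hder Hge.
  destruct (cont0_small f Hc0) as [eta [Heta Hf]].
  set (Q := Rpower d (2 - a) + (Rabs (f d - f 0) + 2) * (a - 2) / m).
  set (Q' := Rabs Q + 1). assert (HQ' : 0 < Q') by (unfold Q'; pose proof (Rabs_pos Q); lra).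
  assert (HQQ : Q < Q') by (unfold Q'; pose proof (Rle_abs Q); lra).
  set (B := Rpower Q' (1 / (2 - a))). assert (HB : 0 < B) by apply Rpower_pos.
  set (e := Rmin (Rmin (d / 2) (eta / 2)) B).
  assert (He0 : 0 < e) by (unfold e; repeat apply Rmin_pos; lra).
  assert (He1 : e <= d / 2) by (unfold e; eapply Rle_trans; [apply Rmin_l|apply Rmin_l]).
  assert (He2 : e <= eta / 2) by (unfold e; eapply Rle_trans; [apply Rmin_l|apply Rmin_r]).
  assert (He3 : e <= B) by (unfold e; apply Rmin_r).
  assert (HeQ : Q' <= Rpower e (2 - a)).
  { replace Q' with (Rpower B (2 - a)). apply Rpower_le_neg; lra.
    unfold B. rewrite Rpower_mult. replace (1 / (2 - a) * (2 - a)) with 1 by (field; lra). apply Rpower_1; lra. }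
  destruct (MVT_gen (fun x => f x - m * Rpower x (2 - a) / (2 - a)) e d (fun x => df x - m * Rpower x (1 - a))) as [z [Hz Hmv]].
  - intros x Hx. rewrite Rmin_left, Rmax_right in Hx by lra.
    apply der_minus. apply Hder; lra.
    apply (der_ext (fun x => m / (2 - a) * Rpower x (2 - a))). intros; cbv beta; field; lra.
    apply der_eq with (m / (2 - a) * ((2 - a) * Rpower x (2 - a - 1))).
    replace (2 - a - 1) with (1 - a) by ring. field; lra.
    apply der_scal, is_derive_Rpower; lra.
  - intros x Hx. rewrite Rmin_left, Rmax_right in Hx by lra. apply continuity_pt_filterlim.
    apply (cont_minus f (fun x => m * Rpower x (2 - a) / (2 - a))).
    apply (ex_derive_continuous f). eexists; apply Hder; lra.
    apply cont_mult. apply cont_mult. apply cont_const. apply Rpower_cont; lra. apply cont_const.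
  - rewrite Rmin_left, Rmax_right in Hz by lra.
    assert (0 <= df z - m * Rpower z (1 - a)) by (assert (H := Hge z ltac:(lra)); lra).
    assert (Hg : f d - f e >= m / (a - 2) * (Rpower e (2 - a) - Rpower d (2 - a))).
    { assert (f d - m * Rpower d (2 - a) / (2 - a) - (f e - m * Rpower e (2 - a) / (2 - a)) >= 0) by nra.
      replace (m / (a - 2) * (Rpower e (2 - a) - Rpower d (2 - a))) with (m * Rpower d (2 - a) / (2 - a) - m * Rpower e (2 - a) / (2 - a)) by (field; lra).
      lra. }
    assert (Hg2 : m / (a - 2) * (Rpower e (2 - a) - Rpower d (2 - a)) > Rabs (f d - f 0) + 2).
    { apply Rlt_gt. apply Rle_lt_trans with (m / (a - 2) * (Q - Rpower d (2 - a))).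
      right. unfold Q. field. split; lra. apply Rmult_lt_compat_l. apply Rdiv_lt_0_compat; lra. lra. }
    assert (Hfe := Hf e ltac:(rewrite Rabs_pos_eq; lra)).
    pose proof (Rle_abs (f d - f 0)). apply Rabs_def2 in Hfe. lra.
Qed.

Lemma ode_fix (w w1 w2 : R -> R) :
  (forall r, 0 < r -> is_derive w r (w1 r)) ->
  (forall r, 0 < r -> is_derive w1 r (w2 r)) ->
  (forall r, 0 < r -> w2 r + (a - 1) / r * w1 r + c * pospow (w r) p = 0) ->
  (forall r, r <= 0 -> w r = 1) ->
  continuous w 0 ->
  good w /\ forall t, TT a c p w t = w t.
Proof. intros Hd1 Hd2 Hode Hneg Hc0.
  assert (wc : forall x, continuous w x).
  { intros x. destruct (Rtotal_order x 0) as [Hx|[Hx|Hx]].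
    - apply (continuous_ext_loc w (fun _ => 1)).
      exists (mkposreal (-x) ltac:(lra)). intros y Hy. unfold ball in Hy; simpl in Hy; unfold AbsRing_ball, abs, minus, plus, opp in Hy; simpl in Hy.
      apply Rabs_def2 in Hy. symmetry; apply Hneg; lra. apply cont_const.
    - subst; auto.
    - apply (ex_derive_continuous w). eexists; apply Hd1; auto. }
  set (Iw := (fun t => II a p w t) : R -> R).
  assert (HIder : forall t, is_derive Iw t (qf a p w t)) by (intros; unfold Iw; eapply II_deriv; eauto).
  assert (HIcont : forall t, continuous Iw t) by (intros; unfold Iw; eapply II_cont; eauto).
  assert (HInn : forall t, 0 <= t -> 0 <= Iw t) by (intros; unfold Iw; eapply II_nonneg; eauto).
  assert (HI0 : Iw 0 = 0) by (unfold Iw, II; rewrite RInt_point; reflexivity).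
  set (z := fun r => Rpower r (a - 1) * w1 r + c * Iw r).
  assert (Hzd : forall r, 0 < r -> is_derive z r 0).
  { intros r Hr. unfold z.
    apply der_eq with (((a - 1) * Rpower r (a - 1 - 1) * w1 r + Rpower r (a - 1) * w2 r) + c * qf a p w r).
    unfold qf. rewrite (pw_pos r) by auto.
    replace (a - 1 - 1) with ((a - 1) + - (1)) by ring. rewrite Rpower_plus, Rpower_Ropp, Rpower_1 by auto.
    assert (Hz := Hode r Hr).
    replace ((a - 1) * (Rpower r (a - 1) * / r) * w1 r + Rpower r (a - 1) * w2 r + c * (Rpower r (a - 1) * pospow (w r) p))
      with (Rpower r (a - 1) * (w2 r + (a - 1) / r * w1 r + c * pospow (w r) p)) by (field; lra).
    rewrite Hz. ring.
    apply der_plus. apply (der_mult (fun r => Rpower r (a - 1)) w1). apply is_derive_Rpower; auto. apply Hd2; auto.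
    apply der_scal. apply HIder. }
  assert (Hzc : forall r, 0 < r -> z r = z 1).
  { intros r Hr. destruct (MVT_gen z 1 r (fun _ => 0)) as [y [Hy Hm]].
    intros x Hx. apply Hzd. apply Rmin_glb_lt in Hx || idtac. pose proof (Rmin_r 1 r). pose proof (Rmin_l 1 r). destruct Hx. unfold Rmin in *; destruct (Rle_dec 1 r); lra.
    intros x Hx. apply continuity_pt_filterlim. apply (ex_derive_continuous z). eexists; apply Hzd.
    destruct Hx. unfold Rmin in *; destruct (Rle_dec 1 r); lra.
    lra. }
  set (K := z 1).
  assert (Hw1 : forall r, 0 < r -> w1 r = Rpower r (1 - a) * (K - c * Iw r)).
  { intros r Hr. unfold K. rewrite <- (Hzc r Hr). unfold z.
    assert (Rpower r (1 - a) * Rpower r (a - 1) = 1).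
    { rewrite <- Rpower_plus. replace (1 - a + (a - 1)) with 0 by ring. apply Rpower_O; auto. }
    replace (Rpower r (1 - a) * (Rpower r (a - 1) * w1 r + c * Iw r - c * Iw r)) with ((Rpower r (1 - a) * Rpower r (a - 1)) * w1 r) by ring.
    rewrite H; ring. }
  assert (HK : K = 0).
  { destruct (Rtotal_order K 0) as [HK|[HK|HK]]; auto; exfalso.
    - apply (blowup (fun x => - w x) (fun x => - w1 x) (- K) 1); try lra.
      apply (continuous_opp w); auto.
      intros r Hr. apply (is_derive_opp w); apply Hd1; lra.
      intros r Hr. rewrite Hw1 by lra. assert (0 < Rpower r (1 - a)) by apply Rpower_pos.
      assert (0 <= Iw r) by (apply HInn; lra). assert (0 <= Rpower r (1 - a) * (c * Iw r)) by (apply Rmult_le_pos; nra). nra.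
    - assert (Hs := HIcont 0). apply filterlim_locally with (eps := mkposreal (K / (2 * c)) ltac:(apply Rdiv_lt_0_compat; lra)) in Hs.
      destruct Hs as [eta Heta].
      pose proof (cond_pos eta). apply (blowup w w1 (K / 2) (eta / 2)); try lra.
      apply Hc0. intros r Hr; apply Hd1; lra.
      intros r Hr. rewrite Hw1 by lra.
      assert (Hb := Heta r). unfold ball in Hb; simpl in Hb; unfold AbsRing_ball, abs, minus, plus, opp in Hb; simpl in Hb.
      rewrite Ropp_0, Rplus_0_r, HI0, Ropp_0, Rplus_0_r in Hb.
      assert (Hr' : Rabs r < eta) by (rewrite Rabs_pos_eq; pose proof (cond_pos eta); lra).
      specialize (Hb Hr'). apply Rabs_def2 in Hb. destruct Hb as [Hb _].
      assert (c * Iw r < K / 2) by (apply Rmult_lt_reg_l with (/ c); [apply Rinv_0_lt_compat; lra|]; replace (/ c * (c * Iw r)) with (Iw r) by (field; lra); replace (/ c * (K / 2)) with (K / (2 * c)) by (field; lra); lra).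
      assert (0 < Rpower r (1 - a)) by apply Rpower_pos. nra. }
  rewrite HK in Hw1.
  assert (Hle1 : forall x, w x <= 1).
  { intros x. destruct (Rle_or_lt x 0). rewrite Hneg; lra.
    destruct (MVT_gen w 0 x (fun y => - c * pospow y (1 - a) * Iw y)) as [y [Hy Hm]].
    intros t Ht. rewrite Rmin_left, Rmax_right in Ht by lra. eapply der_eq. 2: apply Hd1; lra.
    rewrite Hw1 by lra. rewrite pw_pos by lra. ring.
    intros; apply continuity_pt_filterlim; apply wc.
    rewrite Rmin_left, Rmax_right in Hy by lra. rewrite (Hneg 0) in Hm by lra.
    assert (0 <= pospow y (1 - a)) by apply pw_nonneg. assert (0 <= Iw y) by (apply HInn; lra).
    assert (0 <= c * pospow y (1 - a) * Iw y) by (apply Rmult_le_pos; [apply Rmult_le_pos|]; lra).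
    nra. }
  assert (Gw : good w) by (split; auto).
  split; auto.
  intros t. destruct (Rle_or_lt t 0). rewrite TT_neg, Hneg; auto.
  destruct (MVT_gen (fun x => w x - TT a c p w x) 0 t (fun _ => 0)) as [y [Hy Hm]].
  - intros x Hx. rewrite Rmin_left, Rmax_right in Hx by lra.
    apply der_eq with (w1 x - (- c * JJ a p w x)).
    rewrite Hw1 by lra. unfold JJ. rewrite pw_pos by lra. fold (Iw x). ring.
    apply der_minus. apply Hd1; lra. eapply TT_deriv; eauto.
  - intros x _. apply continuity_pt_filterlim. apply (cont_minus w (TT a c p w)); auto. eapply TT_cont; eauto.
  - rewrite (TT_neg a c p w 0), (Hneg 0) in Hm by lra. lra.
Qed.
End Uniq.



Section Main.
Variable N : nat.
Variables beta k p : R.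
Hypothesis HN : (3 <= N)%nat.
Hypothesis Hb : -2 < beta.
Hypothesis Hk : 0 < k.
Hypothesis HpS : pS N beta < p.

Let n := INR N.
Lemma hn : 3 <= n.
Proof. unfold n. replace 3 with (INR 3) by (simpl; ring). apply le_INR; auto. Qed.

Lemma hp_main : n + 2 + 2 * beta < p * (n - 2).
Proof. pose proof hn. unfold pS in HpS. fold n in HpS.
  apply Rmult_lt_compat_r with (r := n - 2) in HpS; [|lra].
  unfold Rdiv in HpS. rewrite Rmult_assoc, Rinv_l in HpS by lra. lra. Qed.

Definition th := ((n - 2) * p - n - beta) / 2.
Definition aa := 2 + (n - 2) / th.
Definition cc := k / th ^ 2.

Lemma th_pos : 0 < th.
Proof. unfold th. pose proof hp_main. pose proof hn. lra. Qed.

Lemma p_gt1 : 1 < p.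
Proof. pose proof hp_main. pose proof hn.
  destruct (Rle_or_lt p 1); auto. assert (p * (n - 2) <= 1 * (n - 2)) by (apply Rmult_le_compat_r; lra). lra. Qed.

Lemma aa_gt2 : 2 < aa.
Proof. unfold aa. pose proof hn. pose proof th_pos. assert (0 < (n - 2) / th) by (apply Rdiv_lt_0_compat; lra). lra. Qed.

Lemma cc_pos : 0 < cc.
Proof. unfold cc. pose proof th_pos. apply Rdiv_lt_0_compat; auto. apply pow_lt; auto. Qed.

Lemma sub_main : (aa - 2) * (p - 1) < 4.
Proof. unfold aa. pose proof th_pos. pose proof hn. pose proof hp_main.
  replace (2 + (n - 2) / th - 2) with ((n - 2) / th) by ring.
  apply Rmult_lt_reg_r with th; auto.
  replace ((n - 2) / th * (p - 1) * th) with ((n - 2) * (p - 1)) by (field; lra).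
  unfold th. lra. Qed.

Lemma exp_id : - n - 2 * th = beta + (2 - n) * p.
Proof. unfold th. field. Qed.

Let Ha := aa_gt2.
Let Hc := cc_pos.
Let Hp1 : 1 <= p. Proof. pose proof p_gt1; lra. Qed.

Definition u0 := uu aa cc p.
Lemma u0_good : good u0.
Proof. unfold u0. apply uu_good; auto. Qed.
Lemma u0_fix t : TT aa cc p u0 t = u0 t.
Proof. unfold u0. apply uu_fix; auto. Qed.

Definition v0 r := Rpower r (2 - n) * u0 (Rpower r (- th)).

Lemma u0_has_zero : exists t, 0 < t /\ u0 t = 0.
Proof.
  destruct (Classical_Prop.classic (exists t, 0 < t /\ u0 t <= 0)) as [[t [Ht Hu]]|Hn].
  - destruct (Req_dec (u0 t) 0). exists t; auto.
    destruct (IVT (fun x => - u0 x) 0 t) as [z [Hz Hz0]].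
    + intros x. apply continuity_pt_filterlim. apply (continuous_opp u0). apply u0_good.
    + auto.
    + rewrite (u_at0 aa cc p u0 u0_fix). lra.
    + lra.
    + exists z. split. destruct (Req_dec z 0). subst. rewrite (u_at0 aa cc p u0 u0_fix) in Hz0. lra. lra. lra.
  - exfalso. apply (no_pos_solution aa cc p Ha Hc p_gt1 sub_main u0 u0_good u0_fix).
    intros t Ht. destruct (Rlt_or_le 0 (u0 t)); auto. exfalso; apply Hn; exists t; auto.
Qed.


Lemma u0_d1 s : 0 < s -> is_derive u0 s (U1 aa cc p u0 s).
Proof. intros; eapply u_deriv; eauto. apply u0_good. apply u0_fix. Qed.
Lemma u0_d2 s : 0 < s -> is_derive (U1 aa cc p u0) s (U2 aa cc p u0 s).
Proof. intros; eapply U1_deriv; eauto. apply u0_good. Qed.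

Lemma pow_Rpower_N r : 0 < r -> r ^ (N - 2) = Rpower r (n - 2).
Proof. intros Hr. rewrite <- Rpower_pow by auto. f_equal. unfold n. rewrite minus_INR by lia. reflexivity. Qed.

Lemma v0_solves : solves N beta k p v0.
Proof.
  assert (Hv : forall r, v0 r = vt (2 - n) (- th) u0 r) by reflexivity.
  assert (HD1 : forall r, 0 < r -> Derive v0 r = v1 (2 - n) (- th) u0 (U1 aa cc p u0) r).
  { intros r Hr. rewrite <- (Derive_vt (2 - n) (- th) u0 (U1 aa cc p u0) u0_d1 r Hr). reflexivity. }
  assert (HD2 : forall r, 0 < r -> Derive_n v0 2 r = v2 (2 - n) (- th) u0 (U1 aa cc p u0) (U2 aa cc p u0) r).
  { intros r Hr. rewrite <- (Derive2_vt (2 - n) (- th) u0 (U1 aa cc p u0) (U2 aa cc p u0) u0_d1 u0_d2 r Hr). reflexivity. }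
  split; [|split].
  - split; [|split].
    + intros r Hr. eexists. apply (vt_der (2 - n) (- th) u0 (U1 aa cc p u0) u0_d1 r Hr).
    + intros r Hr. eexists. apply (is_derive_ext_loc (v1 (2 - n) (- th) u0 (U1 aa cc p u0))).
      apply locally_pos; auto. intros y Hy. symmetry. apply HD1; auto.
      apply v1_der; auto. apply u0_d1. apply u0_d2.
    + intros r Hr. apply (continuous_ext_loc (Derive_n v0 2) (v2 (2 - n) (- th) u0 (U1 aa cc p u0) (U2 aa cc p u0))).
      apply locally_pos; auto. intros y Hy. symmetry. apply HD2; auto.
      assert (Hrho : 0 < Rpower r (- th)) by apply Rpower_pos.
      apply v2_cont; auto. apply u0_good. eapply U1_cont; eauto. apply u0_good. eapply U2_cont; eauto. apply u0_good.
  - intros r Hr. fold n. rewrite HD1, HD2 by auto.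
    rewrite (lap_id n th u0 (U1 aa cc p u0) (U2 aa cc p u0) r th_pos Hr). cbv zeta.
    set (rho := Rpower r (- th)). assert (Hrho : 0 < rho) by apply Rpower_pos.
    assert (Ho := ode_u aa cc p u0 rho Hrho). fold aa.
    replace (U2 aa cc p u0 rho + (aa - 1) / rho * U1 aa cc p u0 rho) with (- cc * pospow (u0 rho) p) by lra.
    unfold v0. fold rho. rewrite pw_mul by apply Rpower_pos. rewrite Rpower_mult.
    rewrite exp_id, Rpower_plus. unfold cc. field. pose proof th_pos; lra.
  - apply is_lim_spec. intros eps.
    assert (Hc0 := proj1 u0_good 0). apply filterlim_locally with (eps := eps) in Hc0.
    destruct Hc0 as [eta Heta].
    exists (Rpower eta (- / th)). intros r Hr.
    assert (HM : 0 < Rpower eta (- / th)) by apply Rpower_pos.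
    assert (Hr0 : 0 < r) by lra.
    rewrite pow_Rpower_N by auto. unfold v0.
    rewrite <- Rmult_assoc, <- Rpower_plus. replace (n - 2 + (2 - n)) with 0 by ring. rewrite Rpower_O, Rmult_1_l by auto.
    rewrite <- (u_at0 aa cc p u0 u0_fix).
    apply (Heta (Rpower r (- th))). unfold ball; simpl; unfold AbsRing_ball, abs, minus, plus, opp; simpl.
    rewrite Ropp_0, Rplus_0_r. rewrite Rabs_pos_eq by (left; apply Rpower_pos).
    replace (pos eta) with (Rpower (Rpower eta (- / th)) (- th)).
    apply Rpower_lt_neg. split; auto. pose proof th_pos; lra.
    rewrite Rpower_mult. replace (- / th * - th) with 1 by (field; pose proof th_pos; lra). apply Rpower_1, cond_pos.
Qed.

Lemma Rpower_inv_th r : 0 < r -> Rpower (Rpower r (- th)) (- / th) = r.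
Proof. intros Hr. rewrite Rpower_mult. replace (- th * - / th) with 1 by (field; pose proof th_pos; lra). apply Rpower_1; auto. Qed.

Lemma Rpower_inv_th' r : 0 < r -> Rpower (Rpower r (- / th)) (- th) = r.
Proof. intros Hr. rewrite Rpower_mult. replace (- / th * - th) with 1 by (field; pose proof th_pos; lra). apply Rpower_1; auto. Qed.

Lemma v0_rbar : exists rbar, is_lub (fun r => 0 < r /\ v0 r = 0) rbar /\ 0 < rbar.
Proof.
  destruct u0_has_zero as [t0 [Ht0 Hz]].
  set (r0 := Rpower t0 (- / th)). assert (Hr0 : 0 < r0) by apply Rpower_pos.
  assert (Er0 : 0 < r0 /\ v0 r0 = 0).
  { split; auto. unfold v0, r0. rewrite Rpower_inv_th' by auto. rewrite Hz. ring. }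
  set (s0 := sqrt (4 / cc)). assert (Hs0 : 0 < s0) by (apply sqrt_lt_R0; apply Rdiv_lt_0_compat; [lra|apply cc_pos]).
  assert (Hbd : bound (fun r => 0 < r /\ v0 r = 0)).
  { exists (Rpower s0 (- / th)). intros r [Hr Hv].
    set (rho := Rpower r (- th)). assert (Hrho : 0 < rho) by apply Rpower_pos.
    assert (Hu : u0 rho = 0).
    { unfold v0 in Hv. fold rho in Hv. assert (0 < Rpower r (2 - n)) by apply Rpower_pos.
      apply Rmult_integral in Hv. destruct Hv; auto. lra. }
    assert (Hl := u_lower aa cc p Ha Hc Hp1 u0 u0_good u0_fix rho ltac:(lra)).
    rewrite Hu in Hl.
    assert (Hs : s0 * s0 = 4 / cc) by (apply sqrt_sqrt; left; apply Rdiv_lt_0_compat; [lra|apply cc_pos]).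
    assert (Hr2 : 4 / cc <= rho ^ 2).
    { pose proof cc_pos. apply Rmult_le_reg_l with cc; auto. replace (cc * (4 / cc)) with 4 by (field; lra). lra. }
    assert (s0 <= rho) by (destruct (Rle_or_lt s0 rho); auto; nra).
    rewrite <- (Rpower_inv_th r) by auto. fold rho.
    apply Rpower_le_neg. lra. pose proof th_pos. assert (0 < / th) by (apply Rinv_0_lt_compat; auto). lra. }
  destruct (completeness _ Hbd (ex_intro _ r0 Er0)) as [m Hm].
  exists m. split; auto. destruct Hm as [Hub _]. specialize (Hub r0 Er0). lra.
Qed.

Section Uq.
Variable w : R -> R.
Hypothesis Hw : solves N beta k p w.

Let A' := - (n - 2) / th.
Let B' := - / th.
Let ut := vt A' B' w.
Let ut1 := v1 A' B' w (Derive w).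
Let ut2 := v2 A' B' w (Derive w) (Derive_n w 2).

Lemma w_d1 s : 0 < s -> is_derive w s (Derive w s).
Proof. intros Hs. apply Derive_correct. destruct Hw as [[H1 _] _]. apply H1; auto. Qed.
Lemma w_d2 s : 0 < s -> is_derive (Derive w) s (Derive_n w 2 s).
Proof. intros Hs. destruct Hw as [[_ [H2 _]] _]. apply (Derive_correct (Derive w)). apply H2; auto. Qed.

Lemma ut_d1 s : 0 < s -> is_derive ut s (ut1 s).
Proof. intros; apply vt_der; auto. apply w_d1. Qed.
Lemma ut_d2 s : 0 < s -> is_derive ut1 s (ut2 s).
Proof. intros; apply v1_der; auto. apply w_d1. apply w_d2. Qed.

Let V := vt (2 - n) (- th) ut.

Lemma V_eq r : 0 < r -> V r = w r.
Proof. intros Hr. unfold V, vt, ut, vt, A', B'.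
  rewrite !Rpower_mult. replace (- th * - / th) with 1 by (field; pose proof th_pos; lra).
  rewrite Rpower_1 by auto. rewrite <- Rmult_assoc, <- Rpower_plus.
  replace (2 - n + - th * (- (n - 2) / th)) with 0 by (field; pose proof th_pos; lra).
  rewrite Rpower_O by auto. ring. Qed.

Lemma ut_ode rho : 0 < rho -> ut2 rho + (aa - 1) / rho * ut1 rho + cc * pospow (ut rho) p = 0.
Proof. intros Hrho.
  set (r := Rpower rho (- / th)). assert (Hr : 0 < r) by apply Rpower_pos.
  assert (Erho : Rpower r (- th) = rho) by (unfold r; apply Rpower_inv_th'; auto).
  destruct Hw as [_ [Hode _]]. specialize (Hode r Hr). fold n in Hode.
  assert (Hloc : locally r (fun t => V t = w t)) by (apply locally_pos; auto; intros; apply V_eq; auto).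
  rewrite <- (Derive_n_ext_loc V w 2 r Hloc) in Hode.
  rewrite <- (Derive_ext_loc V w r Hloc) in Hode.
  rewrite <- (V_eq r Hr) in Hode.
  unfold V in Hode. rewrite (Derive2_vt (2 - n) (- th) ut ut1 ut2 ut_d1 ut_d2 r Hr) in Hode.
  rewrite (Derive_vt (2 - n) (- th) ut ut1 ut_d1 r Hr) in Hode.
  replace (v2 (2 - n) (- th) ut ut1 ut2 r + (n - 1) / r * v1 (2 - n) (- th) ut ut1 r)
    with (v2 (2 - n) (- th) ut ut1 ut2 r + (n - 1) / r * v1 (2 - n) (- th) ut ut1 r) in Hode by reflexivity.
  assert (Hl := lap_id n th ut ut1 ut2 r th_pos Hr). cbv zeta in Hl. rewrite Erho in Hl. fold aa in Hl.
  unfold vt in Hode. rewrite Erho in Hode.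
  rewrite pw_mul in Hode by apply Rpower_pos. rewrite Rpower_mult in Hode.
  assert (Hpos : 0 < th ^ 2 * Rpower r (- n - 2 * th)) by (apply Rmult_lt_0_compat; [apply pow_lt, th_pos|apply Rpower_pos]).
  apply Rmult_eq_reg_l with (th ^ 2 * Rpower r (- n - 2 * th)); [|lra].
  rewrite Rmult_0_r.
  replace (th ^ 2 * Rpower r (- n - 2 * th) * (ut2 rho + (aa - 1) / rho * ut1 rho + cc * pospow (ut rho) p))
    with (th ^ 2 * Rpower r (- n - 2 * th) * (ut2 rho + (aa - 1) / rho * ut1 rho) + th ^ 2 * cc * Rpower r (- n - 2 * th) * pospow (ut rho) p) by ring.
  rewrite <- Hl.
  rewrite exp_id, Rpower_plus. unfold cc.
  rewrite <- Hode. field. pose proof th_pos; lra.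
Qed.

Let ue := fun rho => if Rle_dec rho 0 then 1 else ut rho.

Lemma ue_cont0 : continuous ue 0.
Proof. destruct Hw as [_ [_ Hlim]]. apply is_lim_spec in Hlim.
  apply filterlim_locally. intros eps. destruct (Hlim eps) as [M HM].
  set (M' := Rmax M 0 + 1). assert (HM' : 0 < M') by (unfold M'; pose proof (Rmax_r M 0); lra).
  assert (Hd : 0 < Rpower M' (- th)) by apply Rpower_pos.
  exists (mkposreal _ Hd). intros y Hy. unfold ball in Hy |- *; simpl in Hy |- *; unfold AbsRing_ball, abs, minus, plus, opp in Hy |- *; simpl in Hy |- *.
  unfold ue. destruct (Rle_dec 0 0) as [_|]; [|lra].
  destruct (Rle_dec y 0). rewrite Rplus_opp_r, Rabs_R0. apply cond_pos.
  rewrite Ropp_0, Rplus_0_r, Rabs_pos_eq in Hy by lra.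
  set (r := Rpower y (- / th)).
  assert (Hr : M' < r).
  { rewrite <- (Rpower_inv_th M') by auto. unfold r. apply Rpower_lt_neg. lra.
    pose proof th_pos. assert (0 < / th) by (apply Rinv_0_lt_compat; auto). lra. }
  assert (HMr : M < r) by (unfold M' in Hr; pose proof (Rmax_l M 0); lra).
  specialize (HM r HMr). simpl in HM.
  replace (ut y) with (r ^ (N - 2) * w r). auto.
  rewrite pow_Rpower_N by lra. unfold ut, vt, r, A', B'. rewrite Rpower_mult. f_equal. f_equal. field. pose proof th_pos; lra.
Qed.

Lemma ue_fix : good ue /\ forall t, TT aa cc p ue t = ue t.
Proof. apply (ode_fix aa cc p Ha Hc Hp1 ue ut1 ut2).
  - intros r Hr. apply (is_derive_ext_loc ut). apply locally_pos; auto. intros y Hy. unfold ue. destruct (Rle_dec y 0); [lra|auto].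
    apply ut_d1; auto.
  - apply ut_d2.
  - intros r Hr. unfold ue. destruct (Rle_dec r 0); [lra|]. apply ut_ode; auto.
  - intros r Hr. unfold ue. destruct (Rle_dec r 0); [auto|lra].
  - apply ue_cont0.
Qed.

Lemma w_eq r : 0 < r -> w r = v0 r.
Proof. intros Hr. destruct ue_fix as [G F].
  rewrite <- (V_eq r Hr). unfold V, vt, v0.
  set (rho := Rpower r (- th)). assert (Hrho : 0 < rho) by apply Rpower_pos.
  f_equal. rewrite <- (fix_unique aa cc p Ha Hc Hp1 ue u0 G u0_good F u0_fix rho ltac:(lra)).
  unfold ue. destruct (Rle_dec rho 0); [lra|reflexivity].
Qed.
End Uq.
End Main.




Theorem lemma6p3 (N : nat) (beta kinf p : R) :
  (3 <= N)%nat -> -2 < beta -> 0 < kinf -> pS N beta < p ->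
  exists v : R -> R,
    solves N beta kinf p v /\
    (forall w : R -> R, solves N beta kinf p w -> forall r, 0 < r -> w r = v r) /\
    exists rbar : R,
      is_lub (fun r => 0 < r /\ v r = 0) rbar /\ 0 < rbar.
Proof. intros HN Hb Hk Hp.
  exists (v0 N beta kinf p). split; [|split].
  - eapply v0_solves; eauto.
  - intros w Hw r Hr. eapply w_eq; eauto.
  - eapply v0_rbar; eauto.
Qed.
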